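(* Let $a=\rho\cos\theta$, $b=\rho\sin\theta$ with $\rho\ge 1$ and $0<a<1/2$. Let $\Lambda=\{u_1(1,0)+u_2(a,b): u_1,u_2\in\mathbb{Z}\}$ and let $\mathcal{V}_{\mathbf 0}$ be its Voronoi cell at the origin. Let $\mathbf{X}=(X_1,X_2)$ be uniformly distributed on the Babai cell $\mathcal{B}_{\mathbf 0}=[-1/2,1/2)\times[-b/2,b/2)$, with $X_1$ known only to node-1 and $X_2$ known only to node-2. Run the bit-exchange protocol described in the context. Then the protocol halts with probability one, and when it halts both nodes know the nearest lattice point to $\mathbf{X}$, i.e. the error probability is $0$. Moreover, with $Q=(Q_{-1},Q_0,Q_1)$, $Q_i=\Pr(W_2=i)$, and $P=(P_{-1},P_0,P_1)$, $P_i=\Pr(W_1=i\mid W_2=1)$, the expected total number of communicated bits and the expected number of rounds are finite and equal to $$\bar R=E[R(\mathbf{X})]=H(Q)+(1-Q_0)H(P)+4(1-P_0)(1-Q_0),\qquad \bar N=E[N(\mathbf{X})]=1+2(1-P_0)(1-Q_0),$$ where $H(\cdot)$ denotes the base-2 entropy of a probability vector.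
   Context: Notation: $a=\rho\cos\theta$, $b=\rho\sin\theta$, $\rho\ge1$, $0<a<1/2$. The lattice $\Lambda$ has generator matrix $\begin{pmatrix}1&a\\0&b\end{pmatrix}$ (columns are basis vectors). $\mathcal{V}_{\mathbf 0}$ is the set of points of $\mathbb{R}^2$ whose nearest lattice point is $\mathbf 0$; its boundary is formed by the perpendicular bisectors of $\pm(1,0)$, $\pm(a,b)$, $\pm(a-1,b)$. The Babai cell at the origin is $\mathcal{B}_{\mathbf 0}=[-1/2,1/2)\times[-b/2,b/2)$. Thresholds and intervals: let $\tau_1=b/2-\frac{a(1-a)}{2b}$ and $\tau_{-1}=-\tau_1$; define $\mathcal J_{-1}=[-b/2,\tau_{-1}]$, $\mathcal J_0=(\tau_{-1},\tau_1]$, $\mathcal J_1=(\tau_1,b/2)$. Define $\mathcal I_{-1}=[-1/2,(a-1)/2]$, $\mathcal I_0=((a-1)/2,a/2]$, $\mathcal I_1=(a/2,1/2)$. Protocol. Round 1: node-2 sends $W_2=i$ where $X_2\in\mathcal J_i$. If $W_2=0$ nothing further is sent in round 1. If $W_2=1$, node-1 sends $W_1=i$ where $X_1\in\mathcal I_i$; if $W_2=-1$, node-1 sends $W_1=i$ where $-X_1\in\mathcal I_i$. Round-1 messages are encoded with ideal entropy-code lengths: $W_2=i$ costs $\log_2(1/Q_i)$ bits and, when sent, $W_1=i$ costs $\log_2(1/\Pr(W_1=i\mid W_2))$ bits (by symmetry $\Pr(W_1=i\mid W_2=-1)=P_i$). After round 1 both nodes know a rectangle (product of an $X_1$-interval and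 an $X_2$-interval) containing $\mathbf{X}$. A rectangle is called error-free if its interior does not intersect the boundary of $\mathcal{V}_{\mathbf 0}$ (hence all its interior points have the same nearest lattice point). If the current rectangle is error-free, communication halts. Otherwise (this happens exactly when $W_2\neq0$ and $W_1\neq0$, and then a boundary segment of $\mathcal{V}_{\mathbf 0}$ is a diagonal of the current rectangle), in each subsequent round node-1 sends one bit indicating which half (left/right) of its current interval contains $X_1$, and node-2 sends one bit indicating which half of its current interval contains $X_2$; the current rectangle is replaced by the resulting quarter, and communication halts at the end of the first round in which the current rectangle is error-free. $N(\mathbf{X})$ is the number of rounds (round 1 included) and $R(\mathbf{X})$ is the total number of bits sent (round-1 code lengths plus $2$ bits per later round). For reference, these distributions are explicitly $Q_1=Q_{-1}=\frac{a(1-a)}{2b^2}$, $Q_0=1-2Q_1$, and $P=(a/2,\,1/2,\,(1-a)/2)$. *)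

(* Defs.v *)
From Stdlib Require Import Reals Lra ZArith Arith ClassicalEpsilon.
Open Scope R_scope.

Definition lat (a b : R) (u1 u2 : Z) : R * R :=
  (IZR u1 + a * IZR u2, b * IZR u2).

Definition dist2 (p q : R * R) : R :=
  (fst p - fst q) ^ 2 + (snd p - snd q) ^ 2.

Definition InV0 (a b : R) (p : R * R) : Prop :=
  forall u1 u2 : Z, dist2 p (0, 0) <= dist2 p (lat a b u1 u2).

Definition BdV0 (a b : R) (p : R * R) : Prop :=
  InV0 a b p /\
  forall eps : R, 0 < eps -> exists q : R * R, dist2 q p < eps /\ ~ InV0 a b q.

Definition UniqueNearest (a b : R) (p : R * R) (u1 u2 : Z) : Prop :=
  forall v1 v2 : Z, (v1, v2) <> (u1, u2) ->
    dist2 p (lat a b u1 u2) < dist2 p (lat a b v1 v2).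

(** * Rectangles known to both nodes *)

Record rect := mkRect { r_l1 : R; r_u1 : R; r_l2 : R; r_u2 : R }.

Definition InInterior (r : rect) (p : R * R) : Prop :=
  r_l1 r < fst p < r_u1 r /\ r_l2 r < snd p < r_u2 r.

Definition ErrFree (a b : R) (r : rect) : Prop :=
  ~ (exists p, InInterior r p /\ BdV0 a b p).

Definition tau1 (a b : R) : R := b / 2 - a * (1 - a) / (2 * b).

Definition Jlo (a b : R) (i : Z) : R :=
  if (i =? -1)%Z then - b / 2 else if (i =? 0)%Z then - tau1 a b else tau1 a b.
Definition Jhi (a b : R) (i : Z) : R :=
  if (i =? -1)%Z then - tau1 a b else if (i =? 0)%Z then tau1 a b else b / 2.
Definition Ilo (a : R) (i : Z) : R :=
  if (i =? -1)%Z then - / 2 else if (i =? 0)%Z then (a - 1) / 2 else a / 2.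
Definition Ihi (a : R) (i : Z) : R :=
  if (i =? -1)%Z then (a - 1) / 2 else if (i =? 0)%Z then a / 2 else / 2.

(** Q_i = Pr(W2 = i) and P_i = Pr(W1 = i | W2 = 1) for X uniform on the
    Babai cell (lengths of the intervals divided by the total length). *)
Definition Qd (a b : R) (i : Z) : R := (Jhi a b i - Jlo a b i) / b.
Definition Pd (a : R) (i : Z) : R := Ihi a i - Ilo a i.

Definition W2 (a b x2 : R) : Z :=
  if Rle_dec x2 (- tau1 a b) then (-1)%Z
  else if Rle_dec x2 (tau1 a b) then 0%Z else 1%Z.

Definition Iidx (a s : R) : Z :=
  if Rle_dec s ((a - 1) / 2) then (-1)%Z
  else if Rle_dec s (a / 2) then 0%Z else 1%Z.

(** W1 (only meaningful when W2 <> 0). *)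
Definition W1 (a b : R) (x : R * R) : Z :=
  let w2 := W2 a b (snd x) in
  if (w2 =? 1)%Z then Iidx a (fst x)
  else if (w2 =? -1)%Z then Iidx a (- fst x) else 0%Z.

Definition rect1 (a b : R) (x : R * R) : rect :=
  let w2 := W2 a b (snd x) in
  let w1 := W1 a b x in
  if (w2 =? 0)%Z then mkRect (- / 2) (/ 2) (Jlo a b w2) (Jhi a b w2)
  else if (w2 =? 1)%Z then mkRect (Ilo a w1) (Ihi a w1) (Jlo a b w2) (Jhi a b w2)
  else mkRect (- Ihi a w1) (- Ilo a w1) (Jlo a b w2) (Jhi a b w2).

(** One later round: each node reports which half of its interval
    contains its coordinate. *)
Definition quarter (r : rect) (x : R * R) : rect :=
  let m1 := (r_l1 r + r_u1 r) / 2 in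
  let m2 := (r_l2 r + r_u2 r) / 2 in
  mkRect (if Rlt_dec (fst x) m1 then r_l1 r else m1)
         (if Rlt_dec (fst x) m1 then m1 else r_u1 r)
         (if Rlt_dec (snd x) m2 then r_l2 r else m2)
         (if Rlt_dec (snd x) m2 then m2 else r_u2 r).

(** [rectn a b x k] = rectangle known at the end of round k+1. *)
Fixpoint rectn (a b : R) (x : R * R) (k : nat) : rect :=
  match k with
  | O => rect1 a b x
  | S k' => quarter (rectn a b x k') x
  end.

(** N(x) = n : communication halts at the end of round n (n >= 1). *)
Definition HaltsAt (a b : R) (x : R * R) (n : nat) : Prop :=
  match n with
  | O => False
  | S k => ErrFree a b (rectn a b x k) /\
           forall j, (j < k)%nat -> ~ ErrFree a b (rectn a b x j)
  end.

(** Correct decision when halting at round n: x has a unique nearest lattice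
    point, and it is the common unique nearest lattice point of all interior
    points of the final rectangle (so both nodes know it). *)
Definition CorrectAt (a b : R) (x : R * R) (n : nat) : Prop :=
  exists u1 u2 : Z, UniqueNearest a b x u1 u2 /\
    forall p, InInterior (rectn a b x (n - 1)) p -> UniqueNearest a b p u1 u2.

Definition log2 (x : R) : R := ln x / ln 2.

Definition cost1 (a b : R) (x : R * R) : R :=
  let w2 := W2 a b (snd x) in
  log2 (/ Qd a b w2) +
  (if (w2 =? 0)%Z then 0 else log2 (/ Pd a (W1 a b x))).

Definition RcostAt (a b : R) (x : R * R) (n : nat) : R :=
  cost1 a b x + 2 * INR (n - 1).

Definition H3 (p0 p1 p2 : R) : R :=
  - (p0 * log2 p0 + p1 * log2 p1 + p2 * log2 p2).

Definition Rbar (a b : R) : R :=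
  H3 (Qd a b (-1)) (Qd a b 0) (Qd a b 1)
  + (1 - Qd a b 0) * H3 (Pd a (-1)) (Pd a 0) (Pd a 1)
  + 4 * (1 - Pd a 0) * (1 - Qd a b 0).

Definition Nbar (a b : R) : R := 1 + 2 * (1 - Pd a 0) * (1 - Qd a b 0).

Definition indic (P : Prop) : R :=
  if excluded_middle_informative P then 1 else 0.

Definition RInt_is (f : R -> R) (lo hi v : R) : Prop :=
  exists pr : Riemann_integrable f lo hi, RiemannInt pr = v.

Definition Int2_is (b : R) (F : R -> R -> R) (v : R) : Prop :=
  exists g : R -> R,
    (forall x1, - / 2 <= x1 <= / 2 -> RInt_is (fun x2 => F x1 x2) (- b / 2) (b / 2) (g x1)) /\
    RInt_is g (- / 2) (/ 2) v.

(* Main.v *)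
From Coquelicot Require Import Coquelicot.
Require Import Defs.
From Stdlib Require Import Reals ZArith Arith Lra Lia Psatz ClassicalEpsilon.
Open Scope R_scope.

Definition Par (a b : R) := 0 < a < / 2 /\ 0 < b /\ 1 <= a*a + b*b.

Definition Hex (a b : R) (q : R * R) : Prop :=
  let q1 := fst q in let y := b * snd q in
  0 < 1 - 2*q1 /\ 0 < 1 + 2*q1 /\
  0 < a*a+b*b - 2*(a*q1 + y) /\ 0 < a*a+b*b + 2*(a*q1 + y) /\
  0 < (a-1)*(a-1)+b*b - 2*((a-1)*q1 + y) /\ 0 < (a-1)*(a-1)+b*b + 2*((a-1)*q1 + y).

Definition HexLe (a b : R) (q : R * R) : Prop :=
  let q1 := fst q in let y := b * snd q in
  0 < 1 - 2*q1 /\ 0 < 1 + 2*q1 /\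
  0 <= a*a+b*b - 2*(a*q1 + y) /\ 0 <= a*a+b*b + 2*(a*q1 + y) /\
  0 <= (a-1)*(a-1)+b*b - 2*((a-1)*q1 + y) /\ 0 <= (a-1)*(a-1)+b*b + 2*((a-1)*q1 + y).

Lemma dist2_diff a b q v1 v2 :
  dist2 q (lat a b v1 v2) - dist2 q (0,0) =
  let S := IZR v1 + a * IZR v2 in let K := IZR v2 in
  S*S - 2*(fst q)*S + b*b*K*K - 2*(b*snd q)*K.
Proof. destruct q; unfold dist2, lat; simpl; ring. Qed.

Lemma hex_core a b q1 y (V K : Z) (H : Par a b)
  (h1 : 0 < 1 - 2*q1) (h2 : 0 < 1 + 2*q1)
  (h3 : 0 <= a*a+b*b - 2*(a*q1 + y)) (h4 : 0 <= a*a+b*b + 2*(a*q1 + y))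
  (h5 : 0 <= (a-1)*(a-1)+b*b - 2*((a-1)*q1 + y)) (h6 : 0 <= (a-1)*(a-1)+b*b + 2*((a-1)*q1 + y)) :
  (V, K) <> (0%Z, 0%Z) ->
  (V, K) <> (0%Z, 1%Z) -> (V, K) <> ((-1)%Z, 1%Z) ->
  (V, K) <> (0%Z, (-1)%Z) -> (V, K) <> (1%Z, (-1)%Z) ->
  0 < (IZR V + a*IZR K)*(IZR V + a*IZR K) - 2*q1*(IZR V + a*IZR K) + b*b*IZR K*IZR K - 2*y*IZR K.
Proof.
  intros n0 n1 n2 n3 n4. destruct H as [[Ha1 Ha2] [Hb Hab]].
  assert (Hy1 : 2*y <= b*b + a*(1-a)) by nra.
  assert (Hy2 : -(b*b + a*(1-a)) <= 2*y) by nra.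
  assert (Hbb : 3/4 < b*b) by nra.
  assert (Ha4 : a*(1-a) <= 1/4) by (assert (0 <= (a-1/2)*(a-1/2)) by apply Rle_0_sqr; nra).
  assert (Hy1' : 2*y <= b*b + 1/4) by lra.
  assert (Hy2' : -(b*b + 1/4) <= 2*y) by lra.
  assert (Hq : -1/2 < q1 < 1/2) by lra.
  set (S := IZR V + a*IZR K).
  assert (HS : S*S - 2*q1*S >= - (1/4)) by (assert (0 <= (S-q1)*(S-q1)) by apply Rle_0_sqr; nra).
  destruct (Z_lt_le_dec 1 K) as [HK|HK].
  { assert (HK' : 2 <= IZR K) by (apply IZR_le; lia). set (k := IZR K) in *.
    assert (2*y*k <= k*(b*b+1/4)) by nra.
    assert (0 <= (b*b - 3/4)*(k*(k-1))) by (apply Rmult_le_pos; nra).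
    nra. }
  destruct (Z_lt_le_dec K (-1)) as [HK2|HK2].
  { assert (HK' : IZR K <= -2) by (apply IZR_le; lia). set (k := IZR K) in *.
    assert (2*y*(-k) <= (-k)*(b*b+1/4)) by nra.
    assert (0 <= (b*b - 3/4)*(k*(k-1))) by (apply Rmult_le_pos; nra).
    nra. }
  assert (K = 0 \/ K = 1 \/ K = -1)%Z as [E|[E|E]] by lia; subst K.
  - assert (V <> 0%Z) by congruence.
    destruct (Z_lt_le_dec 0 V) as [HV|HV].
    + apply IZR_lt in HV. assert (1 <= IZR V) by (apply IZR_le; apply lt_IZR in HV; lia).
      unfold S; simpl. nra.
    + assert (IZR V <= -1) by (apply IZR_le; lia). unfold S; simpl. nra.
  - assert (V <> 0%Z /\ V <> (-1)%Z) as [] by (split; congruence).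
    unfold S. replace (IZR 1) with 1 by reflexivity.
    destruct (Z_lt_le_dec 0 V) as [HV|HV].
    + assert (1 <= IZR V) by (apply IZR_le; lia). nra.
    + assert (IZR V <= -2) by (apply IZR_le; lia). nra.
  - assert (V <> 0%Z /\ V <> 1%Z) as [] by (split; congruence).
    unfold S. replace (IZR (-1)) with (-1) by reflexivity.
    destruct (Z_lt_le_dec 1 V) as [HV|HV].
    + assert (2 <= IZR V) by (apply IZR_le; lia). nra.
    + assert (IZR V <= -1) by (apply IZR_le; lia). nra.
Qed.

Lemma lat00 a b : lat a b 0 0 = (0,0).
Proof. unfold lat; simpl; f_equal; ring. Qed.

Lemma hex_nonneg a b q (H : Par a b) (Hq : HexLe a b q) v1 v2 :
  0 <= dist2 q (lat a b v1 v2) - dist2 q (0,0).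
Proof.
  rewrite dist2_diff. destruct q as [q1 q2]. simpl. destruct Hq as (h1&h2&h3&h4&h5&h6). simpl in *.
  destruct (Z.eq_dec v1 0) as [->|n1]; [destruct (Z.eq_dec v2 0) as [->|n2]|].
  - simpl. lra.
  - destruct (Z.eq_dec v2 1) as [->|n3]; [simpl; replace (IZR 1) with 1 by reflexivity; lra|].
    destruct (Z.eq_dec v2 (-1)) as [->|n4]; [simpl; replace (IZR (-1)) with (-1) by reflexivity; lra|].
    apply Rlt_le, (hex_core a b q1 (b*q2)); auto; lra || congruence.
  - destruct (Z.eq_dec v1 (-1)) as [->|n5]; [destruct (Z.eq_dec v2 1) as [->|n6]|].
    + replace (IZR 1) with 1 by reflexivity; replace (IZR (-1)) with (-1) by reflexivity. lra.
    + apply Rlt_le, (hex_core a b q1 (b*q2)); auto; lra || congruence.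
    + destruct (Z.eq_dec v1 1) as [->|n7]; [destruct (Z.eq_dec v2 (-1)) as [->|n8]|].
      * replace (IZR 1) with 1 by reflexivity; replace (IZR (-1)) with (-1) by reflexivity. lra.
      * apply Rlt_le, (hex_core a b q1 (b*q2)); auto; lra || congruence.
      * apply Rlt_le, (hex_core a b q1 (b*q2)); auto; lra || congruence.
Qed.

Lemma hex_pos a b q (H : Par a b) (Hq : Hex a b q) v1 v2 :
  (v1, v2) <> (0%Z, 0%Z) -> 0 < dist2 q (lat a b v1 v2) - dist2 q (0,0).
Proof.
  intro nz.
  rewrite dist2_diff. destruct q as [q1 q2]. simpl. destruct Hq as (h1&h2&h3&h4&h5&h6). simpl in *.
  destruct (Z.eq_dec v1 0) as [->|n1]; [destruct (Z.eq_dec v2 0) as [->|n2]|].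
  - congruence.
  - destruct (Z.eq_dec v2 1) as [->|n3]; [simpl; replace (IZR 1) with 1 by reflexivity; lra|].
    destruct (Z.eq_dec v2 (-1)) as [->|n4]; [simpl; replace (IZR (-1)) with (-1) by reflexivity; lra|].
    apply (hex_core a b q1 (b*q2)); auto; lra || congruence.
  - destruct (Z.eq_dec v1 (-1)) as [->|n5]; [destruct (Z.eq_dec v2 1) as [->|n6]|].
    + replace (IZR 1) with 1 by reflexivity; replace (IZR (-1)) with (-1) by reflexivity. lra.
    + apply (hex_core a b q1 (b*q2)); auto; lra || congruence.
    + destruct (Z.eq_dec v1 1) as [->|n7]; [destruct (Z.eq_dec v2 (-1)) as [->|n8]|].
      * replace (IZR 1) with 1 by reflexivity; replace (IZR (-1)) with (-1) by reflexivity. lra.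
      * apply (hex_core a b q1 (b*q2)); auto; lra || congruence.
      * apply (hex_core a b q1 (b*q2)); auto; lra || congruence.
Qed.

Lemma hexle_inV0 a b q (H : Par a b) (Hq : HexLe a b q) : InV0 a b q.
Proof. intros v1 v2. pose proof (hex_nonneg a b q H Hq v1 v2). lra. Qed.

Definition sub (p : R*R) (u : R*R) : R*R := (fst p - fst u, snd p - snd u).

Lemma dist2_shift a b p u1 u2 v1 v2 :
  dist2 p (lat a b v1 v2) = dist2 (sub p (lat a b u1 u2)) (lat a b (v1-u1) (v2-u2)).
Proof. destruct p; unfold dist2, sub, lat; simpl. rewrite !minus_IZR. ring. Qed.

Lemma hex_unique a b p u1 u2 (H : Par a b) (Hq : Hex a b (sub p (lat a b u1 u2))) :
  UniqueNearest a b p u1 u2.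
Proof.
  intros v1 v2 nv. rewrite (dist2_shift a b p u1 u2 u1 u2), (dist2_shift a b p u1 u2 v1 v2).
  rewrite !Z.sub_diag, lat00.
  apply Rminus_gt_0_lt, hex_pos; auto. intro E. injection E; intros. apply nv. f_equal; lia.
Qed.

Lemma unique_inV0 a b p : UniqueNearest a b p 0 0 -> InV0 a b p.
Proof.
  intros U v1 v2. rewrite <- (lat00 a b).
  destruct (Z.eq_dec v1 0) as [->|n1]; [destruct (Z.eq_dec v2 0) as [->|n2]|].
  - lra.
  - left. apply U. congruence.
  - left. apply U. congruence.
Qed.

Lemma good_errfree a b r u1 u2 :
  (forall p, InInterior r p -> UniqueNearest a b p u1 u2) -> ErrFree a b r.
Proof.
  intros G [p [Hi [Hv Hb]]].
  destruct (Z.eq_dec u1 0) as [E1|n1]; [destruct (Z.eq_dec u2 0) as [E2|n2]|].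
  2,3: (assert (X := G p Hi 0%Z 0%Z); rewrite lat00 in X;
        specialize (Hv u1 u2); assert (dist2 p (lat a b u1 u2) < dist2 p (0,0)) by (apply X; congruence); lra).
  subst.
  destruct r as [l1 h1 l2 h2]. destruct p as [p1 p2]. destruct Hi as [[A1 A2] [A3 A4]]; simpl in *.
  set (d := Rmin (Rmin (p1-l1) (h1-p1)) (Rmin (p2-l2) (h2-p2))).
  assert (Hd : 0 < d) by (unfold d; repeat apply Rmin_glb_lt; lra).
  assert (d <= p1 - l1 /\ d <= h1 - p1 /\ d <= p2 - l2 /\ d <= h2 - p2) as (D1&D2&D3&D4).
  { unfold d. repeat split.
    - eapply Rle_trans; [apply Rmin_l|apply Rmin_l].
    - eapply Rle_trans; [apply Rmin_l|apply Rmin_r].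
    - eapply Rle_trans; [apply Rmin_r|apply Rmin_l].
    - eapply Rle_trans; [apply Rmin_r|apply Rmin_r]. }
  destruct (Hb (d*d)) as [[q1 q2] [Dq Nq]]. { nra. }
  apply Nq, unique_inV0, G. unfold dist2 in Dq; simpl in Dq.
  assert (0 <= (q1-p1)^2) by (apply pow2_ge_0). assert (0 <= (q2-p2)^2) by (apply pow2_ge_0).
  assert (Q1 : -d < q1 - p1 < d) by (split; nra).
  assert (Q2 : -d < q2 - p2 < d) by (split; nra).
  unfold InInterior; simpl. lra.
Qed.

Lemma bd_not_errfree a b r c : InInterior r c -> BdV0 a b c -> ~ ErrFree a b r.
Proof. intros Hi Hb E. apply E. exists c. auto. Qed.

Lemma bdv0_of a b c w1 w2 (H : Par a b) :
  HexLe a b c ->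
  dist2 c (lat a b w1 w2) = dist2 c (0,0) ->
  0 < fst (lat a b w1 w2) ^ 2 + snd (lat a b w1 w2) ^ 2 ->
  BdV0 a b c.
Proof.
  intros Hl Eq Hn. split; [apply hexle_inV0; auto|].
  intros eps Heps.
  destruct c as [c1 c2]. destruct (lat a b w1 w2) as [z1 z2] eqn:Ew. simpl in Hn.
  set (N := z1^2 + z2^2) in *.
  assert (HN : 0 < N) by exact Hn.
  set (e := Rmin 1 (eps / (N+1))).
  assert (He1 : 0 < e) by (unfold e; apply Rmin_glb_lt; [lra| apply Rdiv_lt_0_compat; lra]).
  assert (He2 : e <= eps/(N+1)) by apply Rmin_r.
  assert (He3 : e * (N+1) <= eps) by (apply (Rmult_le_compat_r (N+1)) in He2; [|lra]; unfold Rdiv in He2; rewrite Rmult_assoc, Rinv_l in He2; lra).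
  assert (He4 : e <= 1) by apply Rmin_l.
  exists (c1 + e*z1, c2 + e*z2). split.
  - unfold dist2; cbn [fst snd]. replace ((c1 + e*z1 - c1)^2 + (c2 + e*z2 - c2)^2) with (e*e*N) by (unfold N; ring).
    assert (e*e*N < e*(e*(N+1))) by nra.
    assert (e*(e*(N+1)) <= e*eps) by (apply Rmult_le_compat_l; lra).
    nra.
  - intro I. specialize (I w1 w2). rewrite Ew in I. unfold dist2 in *; simpl in *.
    assert (0 < e*N) by nra. nra.
Qed.

Definition hk (L U : R) (k : nat) : R := (U - L) / 2 ^ k.

Fixpoint jj (L U s : R) (k : nat) : nat :=
  match k with
  | O => O
  | S k' => let j := jj L U s k' in
    if Rlt_dec s (((L + INR j * hk L U k') + (L + INR (S j) * hk L U k')) / 2)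
    then (2 * j)%nat else S (2 * j)
  end.

Definition lo L U s k := L + INR (jj L U s k) * hk L U k.
Definition hi L U s k := L + INR (S (jj L U s k)) * hk L U k.

Lemma hk_S L U k : hk L U (S k) = hk L U k / 2.
Proof. unfold hk. simpl. field. apply pow_nonzero. lra. Qed.

Lemma rectn_eq a b x k :
  let r := rect1 a b x in
  rectn a b x k = mkRect (lo (r_l1 r) (r_u1 r) (fst x) k) (hi (r_l1 r) (r_u1 r) (fst x) k)
                         (lo (r_l2 r) (r_u2 r) (snd x) k) (hi (r_l2 r) (r_u2 r) (snd x) k).
Proof.
  intro r. induction k as [|k IH].
  - simpl. unfold lo, hi, hk. simpl. fold r. destruct r as [l1 u1 l2 u2]; simpl. f_equal; field.
  - simpl rectn. rewrite IH. unfold quarter. cbn [r_l1 r_u1 r_l2 r_u2].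
    unfold lo, hi. cbn [jj].
    destruct (Rlt_dec (fst x) _); destruct (Rlt_dec (snd x) _); rewrite ?hk_S.
    all: f_equal; rewrite ?S_INR, ?mult_INR; simpl; field.
Qed.

Lemma jj_bound L U s k : (jj L U s k < 2 ^ k)%nat.
Proof.
  induction k as [|k IH]; simpl; [lia|].
  destruct (Rlt_dec _ _); lia.
Qed.

Lemma jj_S L U s k : jj L U s (S k) = (2 * jj L U s k)%nat \/ jj L U s (S k) = S (2 * jj L U s k).
Proof. simpl. destruct (Rlt_dec _ _); auto. Qed.

Lemma hk_pos L U k : L < U -> 0 < hk L U k.
Proof. intro. unfold hk. apply Rdiv_lt_0_compat; [lra| apply pow_lt; lra]. Qed.

Lemma jj_closed L U s k : L < U -> L <= s <= U -> lo L U s k <= s <= hi L U s k.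
Proof.
  intros HLU Hs. unfold lo, hi. induction k as [|k IH].
  - simpl. unfold hk. simpl. lra.
  - cbn [jj]. set (j := jj L U s k) in *. rewrite hk_S.
    destruct (Rlt_dec _ _) as [Hl|Hl]; rewrite ?S_INR, ?mult_INR in *; simpl INR in *; lra.
Qed.

Lemma jj_open L U s k m : L < U -> (m < 2 ^ k)%nat ->
  L + INR m * hk L U k < s < L + INR (S m) * hk L U k -> jj L U s k = m.
Proof.
  intros HLU. revert m. induction k as [|k IH]; intros m Hm Hs.
  - simpl in Hm; simpl; lia.
  - cbn [jj]. assert (Hh := hk_pos L U k HLU).
    destruct (Nat.Even_or_Odd m) as [[q ->]|[q ->]].
    + rewrite (IH q); [| simpl in Hm; lia | rewrite hk_S, S_INR, mult_INR in Hs; rewrite S_INR; simpl INR in *; lra].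
      destruct (Rlt_dec _ _) as [Hl|Hl]; [reflexivity|].
      exfalso. apply Hl. rewrite hk_S, !S_INR, !mult_INR in *. simpl INR in *. lra.
    + rewrite (IH q); [| simpl in Hm; lia | rewrite hk_S, S_INR, plus_INR, mult_INR in Hs; rewrite S_INR; simpl INR in *; lra].
      destruct (Rlt_dec _ _) as [Hl|Hl]; [|lia].
      exfalso. rewrite hk_S, !S_INR, plus_INR, !mult_INR in *. simpl INR in *. lra.
Qed.

Record DR := mkDR { dL1 : R; dU1 : R; dL2 : R; dU2 : R; danti : bool;
                    un1 : Z; un2 : Z; up1 : Z; up2 : Z }.

Definition tau (L U s : R) : R := (s - L) / (U - L).

Definition Dval (d : DR) (p : R * R) : R :=
  if danti d then tau (dL1 d) (dU1 d) (fst p) + tau (dL2 d) (dU2 d) (snd p) - 1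
  else tau (dL2 d) (dU2 d) (snd p) - tau (dL1 d) (dU1 d) (fst p).

Definition InRegion (d : DR) (p : R * R) : Prop :=
  dL1 d <= fst p <= dU1 d /\ dL2 d < snd p < dU2 d.

Definition DRok (a b : R) (d : DR) : Prop :=
  dL1 d < dU1 d /\ dL2 d < dU2 d /\
  forall p, InRegion d p ->
    (Dval d p < 0 -> UniqueNearest a b p (un1 d) (un2 d)) /\
    (0 < Dval d p -> UniqueNearest a b p (up1 d) (up2 d)) /\
    (Dval d p = 0 -> BdV0 a b p).

Definition sq (d : DR) (k j1 j2 : nat) : rect :=
  mkRect (dL1 d + INR j1 * hk (dL1 d) (dU1 d) k) (dL1 d + INR (S j1) * hk (dL1 d) (dU1 d) k)
         (dL2 d + INR j2 * hk (dL2 d) (dU2 d) k) (dL2 d + INR (S j2) * hk (dL2 d) (dU2 d) k).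

Definition ondiag (d : DR) (k j1 j2 : nat) : Prop :=
  if danti d then (j1 + j2 + 1 = 2 ^ k)%nat else j1 = j2.

Lemma ctau_eq L U k s : L < U -> 2 ^ k * tau L U s = (s - L) / hk L U k.
Proof. intros. assert (2 ^ k <> 0) by (apply pow_nonzero; lra). unfold tau, hk. field. lra. Qed.

Lemma ctau_lt1 L U k s v : L < U -> L + v * hk L U k < s -> v < 2 ^ k * tau L U s.
Proof.
  intros H1 H2. rewrite ctau_eq by auto. assert (Hh := hk_pos L U k H1).
  apply (Rmult_lt_reg_r (hk L U k)); auto. unfold Rdiv. rewrite Rmult_assoc, Rinv_l by lra. lra.
Qed.
Lemma ctau_lt2 L U k s v : L < U -> s < L + v * hk L U k -> 2 ^ k * tau L U s < v.
Proof.
  intros H1 H2. rewrite ctau_eq by auto. assert (Hh := hk_pos L U k H1).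
  apply (Rmult_lt_reg_r (hk L U k)); auto. unfold Rdiv. rewrite Rmult_assoc, Rinv_l by lra. lra.
Qed.
Lemma ctau_le1 L U k s v : L < U -> L + v * hk L U k <= s -> v <= 2 ^ k * tau L U s.
Proof.
  intros H1 H2. rewrite ctau_eq by auto. assert (Hh := hk_pos L U k H1).
  apply (Rmult_le_reg_r (hk L U k)); auto. unfold Rdiv. rewrite Rmult_assoc, Rinv_l by lra. lra.
Qed.
Lemma ctau_le2 L U k s v : L < U -> s <= L + v * hk L U k -> 2 ^ k * tau L U s <= v.
Proof.
  intros H1 H2. rewrite ctau_eq by auto. assert (Hh := hk_pos L U k H1).
  apply (Rmult_le_reg_r (hk L U k)); auto. unfold Rdiv. rewrite Rmult_assoc, Rinv_l by lra. lra.
Qed.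

Lemma INR_pow2 k : INR (2 ^ k) = 2 ^ k.
Proof. rewrite pow_INR. reflexivity. Qed.

Lemma cell_in L U k j s : L < U -> (j < 2 ^ k)%nat ->
  L + INR j * hk L U k <= s <= L + INR (S j) * hk L U k -> L <= s <= U.
Proof.
  intros H1 H2 H3. assert (Hh := hk_pos L U k H1).
  assert (INR (S j) <= 2 ^ k) by (rewrite <- INR_pow2; apply le_INR; lia).
  assert (0 <= INR j) by apply pos_INR.
  assert (2 ^ k * hk L U k = U - L) by (unfold hk; field; apply pow_nonzero; lra).
  assert (0 <= INR j * hk L U k) by (apply Rmult_le_pos; lra).
  assert (INR (S j) * hk L U k <= 2 ^ k * hk L U k) by (apply Rmult_le_compat_r; lra).
  split; lra.
Qed.

Definition pos_side (d : DR) (k j1 j2 : nat) : Prop :=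
  if danti d then (2 ^ k < j1 + j2 + 1)%nat else (j1 < j2)%nat.
Definition neg_side (d : DR) (k j1 j2 : nat) : Prop :=
  if danti d then (j1 + j2 + 1 < 2 ^ k)%nat else (j2 < j1)%nat.

Lemma side_cases d k j1 j2 : ondiag d k j1 j2 \/ pos_side d k j1 j2 \/ neg_side d k j1 j2.
Proof. unfold ondiag, pos_side, neg_side. destruct (danti d); lia. Qed.

Lemma not_on_pos d k j1 j2 : pos_side d k j1 j2 -> ~ ondiag d k j1 j2.
Proof. unfold ondiag, pos_side. destruct (danti d); lia. Qed.
Lemma not_on_neg d k j1 j2 : neg_side d k j1 j2 -> ~ ondiag d k j1 j2.
Proof. unfold ondiag, neg_side. destruct (danti d); lia. Qed.

Lemma cDval d k p : dL1 d < dU1 d -> dL2 d < dU2 d ->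
  2 ^ k * Dval d p =
  if danti d then 2 ^ k * tau (dL1 d) (dU1 d) (fst p) + 2 ^ k * tau (dL2 d) (dU2 d) (snd p) - 2 ^ k
  else 2 ^ k * tau (dL2 d) (dU2 d) (snd p) - 2 ^ k * tau (dL1 d) (dU1 d) (fst p).
Proof. intros. unfold Dval. destruct (danti d); ring. Qed.

Lemma Dval_sign_open d k j1 j2 p : dL1 d < dU1 d -> dL2 d < dU2 d ->
  InInterior (sq d k j1 j2) p ->
  (pos_side d k j1 j2 -> 0 < Dval d p) /\ (neg_side d k j1 j2 -> Dval d p < 0).
Proof.
  intros H1 H2 [[A1 A2] [A3 A4]]. unfold sq in *; cbn [r_l1 r_u1 r_l2 r_u2] in *.
  apply ctau_lt1 in A1; auto. apply ctau_lt2 in A2; auto.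
  apply ctau_lt1 in A3; auto. apply ctau_lt2 in A4; auto.
  assert (Hc : 0 < 2 ^ k) by (apply pow_lt; lra).
  rewrite ?S_INR in *.
  unfold pos_side, neg_side. destruct (danti d) eqn:Ed; split; intro Hs;
  pose proof (cDval d k p H1 H2) as E; rewrite Ed in E.
  - assert (X : (2 ^ k <= j1 + j2)%nat) by lia. apply le_INR in X.
    rewrite INR_pow2, plus_INR in X.
    assert (0 < 2 ^ k * Dval d p) by lra. apply (Rmult_lt_reg_l (2^k)); lra.
  - assert (INR j1 + INR j2 + 2 <= 2 ^ k).
    { rewrite <- INR_pow2. replace 2 with (INR 2) by reflexivity. rewrite <- !plus_INR. apply le_INR. lia. }
    assert (2 ^ k * Dval d p < 0) by lra. apply (Rmult_lt_reg_l (2^k)); lra.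
  - assert (INR j1 + 1 <= INR j2) by (rewrite <- S_INR; apply le_INR; lia).
    assert (0 < 2 ^ k * Dval d p) by lra. apply (Rmult_lt_reg_l (2^k)); lra.
  - assert (INR j2 + 1 <= INR j1) by (rewrite <- S_INR; apply le_INR; lia).
    assert (2 ^ k * Dval d p < 0) by lra. apply (Rmult_lt_reg_l (2^k)); lra.
Qed.

Definition InClosed (r : rect) (p : R * R) : Prop :=
  r_l1 r <= fst p <= r_u1 r /\ r_l2 r <= snd p <= r_u2 r.

Lemma Dval_sign_closed d k j1 j2 p : dL1 d < dU1 d -> dL2 d < dU2 d ->
  InClosed (sq d k j1 j2) p ->
  (pos_side d k j1 j2 -> 0 <= Dval d p) /\ (neg_side d k j1 j2 -> Dval d p <= 0).
Proof.
  intros H1 H2 [[A1 A2] [A3 A4]]. unfold sq in *; cbn [r_l1 r_u1 r_l2 r_u2] in *.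
  apply ctau_le1 in A1; auto. apply ctau_le2 in A2; auto.
  apply ctau_le1 in A3; auto. apply ctau_le2 in A4; auto.
  assert (Hc : 0 < 2 ^ k) by (apply pow_lt; lra).
  rewrite ?S_INR in *.
  unfold pos_side, neg_side. destruct (danti d) eqn:Ed; split; intro Hs;
  pose proof (cDval d k p H1 H2) as E; rewrite Ed in E.
  - assert (X : (2 ^ k <= j1 + j2)%nat) by lia. apply le_INR in X.
    rewrite INR_pow2, plus_INR in X.
    assert (0 <= 2 ^ k * Dval d p) by lra. apply (Rmult_le_reg_l (2^k)); lra.
  - assert (INR j1 + INR j2 + 2 <= 2 ^ k).
    { rewrite <- INR_pow2. replace 2 with (INR 2) by reflexivity. rewrite <- !plus_INR. apply le_INR. lia. }
    assert (2 ^ k * Dval d p <= 0) by lra. apply (Rmult_le_reg_l (2^k)); lra.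
  - assert (INR j1 + 1 <= INR j2) by (rewrite <- S_INR; apply le_INR; lia).
    assert (0 <= 2 ^ k * Dval d p) by lra. apply (Rmult_le_reg_l (2^k)); lra.
  - assert (INR j2 + 1 <= INR j1) by (rewrite <- S_INR; apply le_INR; lia).
    assert (2 ^ k * Dval d p <= 0) by lra. apply (Rmult_le_reg_l (2^k)); lra.
Qed.

Lemma interior_region d k j1 j2 p : dL1 d < dU1 d -> dL2 d < dU2 d ->
  (j1 < 2 ^ k)%nat -> (j2 < 2 ^ k)%nat ->
  InInterior (sq d k j1 j2) p -> InRegion d p.
Proof.
  intros H1 H2 J1 J2 [[A1 A2] [A3 A4]]. unfold sq in *; cbn [r_l1 r_u1 r_l2 r_u2] in *.
  assert (Hh1 := hk_pos _ _ k H1). assert (Hh2 := hk_pos _ _ k H2).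
  assert (B1 := cell_in (dL1 d) (dU1 d) k j1 (fst p) H1 J1 (conj (Rlt_le _ _ A1) (Rlt_le _ _ A2))).
  assert (0 <= INR j2 * hk (dL2 d) (dU2 d) k) by (apply Rmult_le_pos; [apply pos_INR|lra]).
  assert (INR (S j2) <= 2 ^ k) by (rewrite <- INR_pow2; apply le_INR; lia).
  assert (2 ^ k * hk (dL2 d) (dU2 d) k = dU2 d - dL2 d) by (unfold hk; field; apply pow_nonzero; lra).
  assert (INR (S j2) * hk (dL2 d) (dU2 d) k <= 2 ^ k * hk (dL2 d) (dU2 d) k) by (apply Rmult_le_compat_r; lra).
  split; auto. split; lra.
Qed.

Definition center (r : rect) : R * R := ((r_l1 r + r_u1 r) / 2, (r_l2 r + r_u2 r) / 2).

Lemma center_interior d k j1 j2 : dL1 d < dU1 d -> dL2 d < dU2 d ->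
  InInterior (sq d k j1 j2) (center (sq d k j1 j2)).
Proof.
  intros H1 H2. assert (Hh1 := hk_pos _ _ k H1). assert (Hh2 := hk_pos _ _ k H2).
  unfold InInterior, center, sq; cbn [fst snd r_l1 r_u1 r_l2 r_u2]. rewrite !S_INR. lra.
Qed.

Lemma center_on d k j1 j2 : dL1 d < dU1 d -> dL2 d < dU2 d ->
  ondiag d k j1 j2 -> Dval d (center (sq d k j1 j2)) = 0.
Proof.
  intros H1 H2 O.
  assert (Hc : 0 < 2 ^ k) by (apply pow_lt; lra).
  apply (Rmult_eq_reg_l (2^k)); [|lra]. rewrite (cDval d k _ H1 H2), Rmult_0_r.
  unfold center, sq; cbn [fst snd r_l1 r_u1 r_l2 r_u2]. rewrite !ctau_eq by auto.
  assert (Hh1 := hk_pos _ _ k H1). assert (Hh2 := hk_pos _ _ k H2).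
  unfold ondiag in O. destruct (danti d).
  - apply (f_equal INR) in O. rewrite INR_pow2, !plus_INR in O. rewrite <- O. rewrite !S_INR. simpl INR. field. lra.
  - subst. rewrite !S_INR. field. lra.
Qed.

Lemma sq_errfree_iff a b d k j1 j2 : DRok a b d -> (j1 < 2 ^ k)%nat -> (j2 < 2 ^ k)%nat ->
  (ErrFree a b (sq d k j1 j2) <-> ~ ondiag d k j1 j2).
Proof.
  intros [H1 [H2 HR]] J1 J2. split.
  - intros E O. apply (bd_not_errfree a b (sq d k j1 j2) (center (sq d k j1 j2))); auto.
    + apply center_interior; auto.
    + apply (HR _ (interior_region d k j1 j2 _ H1 H2 J1 J2 (center_interior d k j1 j2 H1 H2))).
      apply center_on; auto.
  - intro NO. destruct (side_cases d k j1 j2) as [O|[P|N]]; [tauto| |].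
    + apply (good_errfree a b _ (up1 d) (up2 d)). intros p Hp.
      apply (HR _ (interior_region d k j1 j2 _ H1 H2 J1 J2 Hp)).
      apply (Dval_sign_open d k j1 j2 p H1 H2 Hp); auto.
    + apply (good_errfree a b _ (un1 d) (un2 d)). intros p Hp.
      apply (HR _ (interior_region d k j1 j2 _ H1 H2 J1 J2 Hp)).
      apply (Dval_sign_open d k j1 j2 p H1 H2 Hp); auto.
Qed.

Lemma sq_correct a b d k j1 j2 p : DRok a b d -> (j1 < 2 ^ k)%nat -> (j2 < 2 ^ k)%nat ->
  ~ ondiag d k j1 j2 -> InClosed (sq d k j1 j2) p -> dL2 d < snd p < dU2 d -> Dval d p <> 0 ->
  exists u1 u2, UniqueNearest a b p u1 u2 /\
    forall q, InInterior (sq d k j1 j2) q -> UniqueNearest a b q u1 u2.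
Proof.
  intros [H1 [H2 HR]] J1 J2 NO Hc Hp2 Hd.
  assert (Rp : InRegion d p).
  { split; auto. destruct Hc as [[A1 A2] _]. unfold sq in *; cbn [r_l1 r_u1] in *.
    apply (cell_in _ _ k j1); auto. }
  destruct (side_cases d k j1 j2) as [O|[P|N]]; [tauto| |].
  - exists (up1 d), (up2 d). split.
    + apply (HR _ Rp). destruct (Dval_sign_closed d k j1 j2 p H1 H2 Hc) as [X _]. specialize (X P). lra.
    + intros q Hq. apply (HR _ (interior_region d k j1 j2 _ H1 H2 J1 J2 Hq)).
      apply (Dval_sign_open d k j1 j2 q H1 H2 Hq); auto.
  - exists (un1 d), (un2 d). split.
    + apply (HR _ Rp). destruct (Dval_sign_closed d k j1 j2 p H1 H2 Hc) as [_ X]. specialize (X N). lra.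
    + intros q Hq. apply (HR _ (interior_region d k j1 j2 _ H1 H2 J1 J2 Hq)).
      apply (Dval_sign_open d k j1 j2 q H1 H2 Hq); auto.
Qed.

Definition HexY (a b q1 y : R) : Prop :=
  0 < 1 - 2*q1 /\ 0 < 1 + 2*q1 /\
  0 < a*a+b*b - 2*(a*q1 + y) /\ 0 < a*a+b*b + 2*(a*q1 + y) /\
  0 < (a-1)*(a-1)+b*b - 2*((a-1)*q1 + y) /\ 0 < (a-1)*(a-1)+b*b + 2*((a-1)*q1 + y).
Definition HexLeY (a b q1 y : R) : Prop :=
  0 < 1 - 2*q1 /\ 0 < 1 + 2*q1 /\
  0 <= a*a+b*b - 2*(a*q1 + y) /\ 0 <= a*a+b*b + 2*(a*q1 + y) /\
  0 <= (a-1)*(a-1)+b*b - 2*((a-1)*q1 + y) /\ 0 <= (a-1)*(a-1)+b*b + 2*((a-1)*q1 + y).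

Lemma unique_of a b p u1 u2 (H : Par a b) :
  HexY a b (fst p - (IZR u1 + a * IZR u2)) (b * snd p - b * b * IZR u2) ->
  UniqueNearest a b p u1 u2.
Proof.
  intro Hy. apply hex_unique; auto. unfold Hex, sub, lat; cbn [fst snd].
  replace (b * (snd p - b * IZR u2)) with (b * snd p - b * b * IZR u2) by ring. exact Hy.
Qed.

Lemma bd_of a b p w1 w2 (H : Par a b) :
  HexLeY a b (fst p) (b * snd p) ->
  2 * (fst p * (IZR w1 + a * IZR w2) + (b * snd p) * IZR w2) =
    (IZR w1 + a * IZR w2)^2 + b * b * IZR w2 ^ 2 ->
  0 < (IZR w1 + a * IZR w2)^2 + (b * IZR w2)^2 ->
  BdV0 a b p.
Proof.
  intros Hl Eq Hn. apply (bdv0_of a b p w1 w2); auto.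
  destruct p; unfold dist2, lat in *; cbn [fst snd] in *. nra.
Qed.

Lemma btau a b : 0 < b -> b * tau1 a b = (b*b - a*(1-a)) / 2.
Proof. intro. unfold tau1. field. lra. Qed.

Lemma region_tau d p : dL1 d < dU1 d -> dL2 d < dU2 d -> InRegion d p ->
  let T1 := tau (dL1 d) (dU1 d) (fst p) in let T2 := tau (dL2 d) (dU2 d) (snd p) in
  0 <= T1 <= 1 /\ 0 < T2 < 1 /\
  fst p = dL1 d + T1 * (dU1 d - dL1 d) /\ snd p = dL2 d + T2 * (dU2 d - dL2 d).
Proof.
  intros H1 H2 [[A1 A2] [A3 A4]] T1 T2. unfold T1, T2, tau.
  repeat split.
  - apply Rmult_le_pos; [lra| apply Rlt_le, Rinv_0_lt_compat; lra].
  - apply (Rmult_le_reg_r (dU1 d - dL1 d)); [lra|]. unfold Rdiv. rewrite Rmult_assoc, Rinv_l; lra.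
  - apply Rmult_lt_0_compat; [lra| apply Rinv_0_lt_compat; lra].
  - apply (Rmult_lt_reg_r (dU2 d - dL2 d)); [lra|]. unfold Rdiv. rewrite Rmult_assoc, Rinv_l; lra.
  - field. lra.
  - field. lra.
Qed.

Lemma IZR0 : IZR 0 = 0. Proof. reflexivity. Qed.
Lemma IZR1 : IZR 1 = 1. Proof. reflexivity. Qed.
Lemma IZRm1 : IZR (-1) = -1. Proof. reflexivity. Qed.

Definition dA (a b : R) := mkDR (a/2) (/2) (tau1 a b) (b/2) true 0 0 0 1.

Lemma tau1_lt a b : Par a b -> 0 < tau1 a b < b / 2.
Proof.
  intros [[Ha1 Ha2] [Hb Hab]]. assert (HB := btau a b Hb).
  assert (b * (b/2) = b*b/2) by field.
  assert (a*(1-a) < b*b) by nra. assert (0 < a*(1-a)) by nra.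
  split; apply (Rmult_lt_reg_l b); auto; rewrite HB; lra.
Qed.

Lemma dA_ok a b : Par a b -> DRok a b (dA a b).
Proof.
  intro H. pose proof H as [[Ha1 Ha2] [Hb Hab]]. destruct (tau1_lt a b H) as [Ht1 Ht2].
  assert (HB := btau a b Hb).
  assert (Hbb : 3/4 < b*b) by nra.
  assert (Hk : 0 < a*(1-a)) by nra.
  assert (Hk2 : a*(1-a) < b*b) by nra.
  split; [cbn; lra|]; split; [cbn; lra|]. intros p Hp.
  assert (B1 : dL1 (dA a b) < dU1 (dA a b)) by (cbn; lra).
  assert (B2 : dL2 (dA a b) < dU2 (dA a b)) by (cbn; lra).
  destruct (region_tau _ p B1 B2 Hp) as (T1r & T2r & E1 & E2).
  unfold Dval, dA in *; cbn [danti dL1 dU1 dL2 dU2 un1 un2 up1 up2] in *.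
  set (T1 := tau (a/2) (/2) (fst p)) in *. set (T2 := tau (tau1 a b) (b/2) (snd p)) in *.
  assert (Y : b * snd p = (b*b - a*(1-a))/2 + T2 * (a*(1-a)/2)).
  { rewrite E2. replace (b * (tau1 a b + T2 * (b / 2 - tau1 a b))) with (b * tau1 a b + T2 * (b*b/2 - b*tau1 a b)) by field.
    rewrite HB. field. }
  assert (X : fst p = a/2 + T1 * ((1-a)/2)) by (rewrite E1; field).
  clearbody T1 T2. clear E1 E2.
  split; [|split].
  - intro D. apply unique_of; auto. rewrite Y, X. unfold HexY. repeat split; nra.
  - intro D. apply unique_of; auto. rewrite Y, X. unfold HexY. repeat split; nra.
  - intro D. apply (bd_of a b p 0 1); auto; [| rewrite Y, X; nra| nra].
    rewrite Y, X. unfold HexLeY. repeat split; nra.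
Qed.

Ltac dr_prep H a b :=
  pose proof H as [[Ha1 Ha2] [Hb Hab]];
  let Ht1 := fresh "Ht1" in let Ht2 := fresh "Ht2" in
  destruct (tau1_lt _ _ H) as [Ht1 Ht2];
  let HB := fresh "HB" in assert (HB := btau a b Hb);
  assert (Hbb : 3/4 < b*b) by nra;
  assert (Hk : 0 < a*(1-a)) by nra;
  assert (Hk2 : a*(1-a) < b*b) by nra.

Definition dB (a b : R) := mkDR (- / 2) ((a-1)/2) (tau1 a b) (b/2) false 0 0 (-1) 1.
Definition dC (a b : R) := mkDR (- / 2) (- (a/2)) (- b / 2) (- tau1 a b) true 0 (-1) 0 0.
Definition dD (a b : R) := mkDR (- ((a - 1) / 2)) (- - / 2) (- b / 2) (- tau1 a b) false 1 (-1) 0 0.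

Lemma dB_ok a b : Par a b -> DRok a b (dB a b).
Proof.
  intro H. dr_prep H a b.
  assert (B1 : dL1 (dB a b) < dU1 (dB a b)) by (cbn; lra).
  assert (B2 : dL2 (dB a b) < dU2 (dB a b)) by (cbn; lra).
  split; [exact B1|]; split; [exact B2|]. intros p Hp.
  destruct (region_tau _ p B1 B2 Hp) as (T1r & T2r & E1 & E2).
  unfold Dval, dB in *; cbn [danti dL1 dU1 dL2 dU2 un1 un2 up1 up2] in *.
  set (T1 := tau (- / 2) ((a-1)/2) (fst p)) in *. set (T2 := tau (tau1 a b) (b/2) (snd p)) in *.
  assert (Y : b * snd p = (b*b - a*(1-a))/2 + T2 * (a*(1-a)/2)).
  { rewrite E2. replace (b * (tau1 a b + T2 * (b / 2 - tau1 a b))) with (b * tau1 a b + T2 * (b*b/2 - b*tau1 a b)) by field.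
    rewrite HB. field. }
  assert (X : fst p = - / 2 + T1 * (a/2)) by (rewrite E1; field).
  clearbody T1 T2. clear E1 E2.
  split; [|split].
  - intro D. apply unique_of; auto. rewrite Y, X. unfold HexY. repeat split; nra.
  - intro D. apply unique_of; auto. rewrite Y, X. unfold HexY. repeat split; nra.
  - intro D. apply (bd_of a b p (-1) 1); auto; [| rewrite Y, X; nra| nra].
    rewrite Y, X. unfold HexLeY. repeat split; nra.
Qed.

Lemma dC_ok a b : Par a b -> DRok a b (dC a b).
Proof.
  intro H. dr_prep H a b.
  assert (B1 : dL1 (dC a b) < dU1 (dC a b)) by (cbn; lra).
  assert (B2 : dL2 (dC a b) < dU2 (dC a b)) by (cbn; lra).
  split; [exact B1|]; split; [exact B2|]. intros p Hp.
  destruct (region_tau _ p B1 B2 Hp) as (T1r & T2r & E1 & E2).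
  unfold Dval, dC in *; cbn [danti dL1 dU1 dL2 dU2 un1 un2 up1 up2] in *.
  set (T1 := tau (- / 2) (- (a/2)) (fst p)) in *. set (T2 := tau (- b / 2) (- tau1 a b) (snd p)) in *.
  assert (Y : b * snd p = -(b*b)/2 + T2 * (a*(1-a)/2)).
  { rewrite E2. replace (b * (- b / 2 + T2 * (- tau1 a b - - b / 2))) with (-(b*b)/2 + T2 * (b*b/2 - b*tau1 a b)) by field.
    rewrite HB. field. }
  assert (X : fst p = - / 2 + T1 * ((1-a)/2)) by (rewrite E1; field).
  clearbody T1 T2. clear E1 E2.
  split; [|split].
  - intro D. apply unique_of; auto. rewrite Y, X. unfold HexY. repeat split; nra.
  - intro D. apply unique_of; auto. rewrite Y, X. unfold HexY. repeat split; nra.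
  - intro D. apply (bd_of a b p 0 (-1)); auto; [| rewrite Y, X; nra| nra].
    rewrite Y, X. unfold HexLeY. repeat split; nra.
Qed.

Lemma dD_ok a b : Par a b -> DRok a b (dD a b).
Proof.
  intro H. dr_prep H a b.
  assert (B1 : dL1 (dD a b) < dU1 (dD a b)) by (cbn; lra).
  assert (B2 : dL2 (dD a b) < dU2 (dD a b)) by (cbn; lra).
  split; [exact B1|]; split; [exact B2|]. intros p Hp.
  destruct (region_tau _ p B1 B2 Hp) as (T1r & T2r & E1 & E2).
  unfold Dval, dD in *; cbn [danti dL1 dU1 dL2 dU2 un1 un2 up1 up2] in *.
  set (T1 := tau (- ((a - 1) / 2)) (- - / 2) (fst p)) in *. set (T2 := tau (- b / 2) (- tau1 a b) (snd p)) in *.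
  assert (Y : b * snd p = -(b*b)/2 + T2 * (a*(1-a)/2)).
  { rewrite E2. replace (b * (- b / 2 + T2 * (- tau1 a b - - b / 2))) with (-(b*b)/2 + T2 * (b*b/2 - b*tau1 a b)) by field.
    rewrite HB. field. }
  assert (X : fst p = (1-a)/2 + T1 * (a/2)) by (rewrite E1; field).
  clearbody T1 T2. clear E1 E2.
  split; [|split].
  - intro D. apply unique_of; auto. rewrite Y, X. unfold HexY. repeat split; nra.
  - intro D. apply unique_of; auto. rewrite Y, X. unfold HexY. repeat split; nra.
  - intro D. apply (bd_of a b p 1 (-1)); auto; [| rewrite Y, X; nra| nra].
    rewrite Y, X. unfold HexLeY. repeat split; nra.
Qed.

Lemma scalR (x y : R) : scal x y = x * y. Proof. reflexivity. Qed.
Lemma plusR (x y : R) : plus x y = x + y. Proof. reflexivity. Qed.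

Lemma ext_open (f g : R -> R) L U l : L <= U -> (forall x, L < x < U -> f x = g x) ->
  is_RInt f L U l -> is_RInt g L U l.
Proof.
  intros HLU E. apply is_RInt_ext. rewrite Rmin_left, Rmax_right by lra. auto.
Qed.

Lemma RInt_const_ext (f : R -> R) L U c : L <= U -> (forall x, L < x < U -> f x = c) ->
  is_RInt f L U ((U - L) * c).
Proof.
  intros HLU E. apply (ext_open (fun _ => c)); auto. intros; symmetry; auto.
  rewrite <- scalR. exact (@is_RInt_const R_NormedModule L U c).
Qed.

Lemma RInt_zero_ext (f : R -> R) L U : L <= U -> (forall x, L < x < U -> f x = 0) ->
  is_RInt f L U 0.
Proof. intros. replace 0 with ((U - L) * 0) by ring. apply RInt_const_ext; auto. Qed.

Lemma chasles (f : R -> R) a b c l1 l2 : is_RInt f a b l1 -> is_RInt f b c l2 -> is_RInt f a c (l1 + l2).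
Proof. intros. rewrite <- plusR. exact (@is_RInt_Chasles R_NormedModule f a b c l1 l2 H H0). Qed.

Lemma RInt_zero_pt (f : R -> R) L U y : L <= U -> (forall x, L < x < U -> x <> y -> f x = 0) ->
  is_RInt f L U 0.
Proof.
  intros HLU E.
  destruct (Rlt_dec L y) as [H1|H1]; [destruct (Rlt_dec y U) as [H2|H2]|].
  - replace 0 with (0 + 0) by ring. apply (chasles _ _ y).
    + apply RInt_zero_ext; [lra|]. intros; apply E; lra.
    + apply RInt_zero_ext; [lra|]. intros; apply E; lra.
  - apply RInt_zero_ext; auto. intros; apply E; lra.
  - apply RInt_zero_ext; auto. intros; apply E; lra.
Qed.

Fixpoint fsum (v : nat -> R) (M : nat) : R :=
  match M with O => 0 | S M' => fsum v M' + v M' end.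

Lemma RInt_cells (f : R -> R) (v : nat -> R) L h M : 0 < h ->
  (forall m s, (m < M)%nat -> L + INR m * h < s < L + INR (S m) * h -> f s = v m) ->
  is_RInt f L (L + INR M * h) (fsum (fun m => h * v m) M).
Proof.
  intros Hh. induction M as [|M IH]; intros Hf.
  - simpl. replace (L + 0 * h) with L by ring. apply RInt_zero_ext; [lra|]. intros; lra.
  - simpl fsum. apply (chasles _ _ (L + INR M * h)).
    + apply IH. intros; apply Hf; auto.
    + replace (h * v M) with ((L + INR (S M) * h - (L + INR M * h)) * v M) by (rewrite S_INR; ring).
      apply RInt_const_ext. { rewrite S_INR; lra. }
      intros; apply Hf; auto.
Qed.

Lemma fsum_ext v w M : (forall m, (m < M)%nat -> v m = w m) -> fsum v M = fsum w M.
Proof. induction M; simpl; intros; auto. rewrite IHM, H; auto. Qed.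

Lemma fsum_one (c : R) m0 M : (m0 < M)%nat ->
  fsum (fun m => if Nat.eq_dec m m0 then c else 0) M = c.
Proof.
  induction M; intros H; [lia|]. simpl.
  destruct (Nat.eq_dec M m0).
  - subst. replace (fsum _ m0) with 0. ring.
    clear. assert (forall K, (K <= m0)%nat -> fsum (fun m => if Nat.eq_dec m m0 then c else 0) K = 0).
    { induction K; simpl; intros; auto. rewrite IHK by lia. destruct (Nat.eq_dec K m0); [lia|ring]. }
    symmetry; auto.
  - rewrite IHM by lia. ring.
Qed.

Lemma to_RInt_is (f : R -> R) a b v : is_RInt f a b v -> RInt_is f a b v.
Proof.
  intro H. assert (E : ex_RInt f a b) by (exists v; auto).
  exists (ex_RInt_Reals_0 f a b E). rewrite <- RInt_Reals. apply is_RInt_unique; auto.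
Qed.

Lemma indic_true (P : Prop) : P -> indic P = 1.
Proof. intro. unfold indic. destruct (excluded_middle_informative P); tauto. Qed.
Lemma indic_false (P : Prop) : ~ P -> indic P = 0.
Proof. intro. unfold indic. destruct (excluded_middle_informative P); tauto. Qed.

Lemma ondiag_dec d k j1 j2 : ondiag d k j1 j2 \/ ~ ondiag d k j1 j2.
Proof. unfold ondiag. destruct (danti d); lia. Qed.

Lemma ondiag_down d i L1 U1 L2 U2 x1 x2 :
  ondiag d (S i) (jj L1 U1 x1 (S i)) (jj L2 U2 x2 (S i)) -> ondiag d i (jj L1 U1 x1 i) (jj L2 U2 x2 i).
Proof.
  unfold ondiag. destruct (jj_S L1 U1 x1 i) as [E1|E1]; destruct (jj_S L2 U2 x2 i) as [E2|E2];
  rewrite E1, E2; destruct (danti d); simpl; lia.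
Qed.

Lemma ondiag_all d k L1 U1 L2 U2 x1 x2 :
  ondiag d k (jj L1 U1 x1 k) (jj L2 U2 x2 k) ->
  forall i, (i <= k)%nat -> ondiag d i (jj L1 U1 x1 i) (jj L2 U2 x2 i).
Proof.
  induction k; intros H i Hi.
  - replace i with 0%nat by lia. auto.
  - destruct (Nat.eq_dec i (S k)) as [->|]; auto.
    apply IHk; [apply ondiag_down; auto| lia].
Qed.

Lemma ondiag0 d : ondiag d 0 0 0.
Proof. unfold ondiag. destruct (danti d); simpl; lia. Qed.

Definition RHyp a b d x := forall k, rectn a b x k =
  sq d k (jj (dL1 d) (dU1 d) (fst x) k) (jj (dL2 d) (dU2 d) (snd x) k).

Lemma halts_diag a b d x k : DRok a b d -> RHyp a b d x ->
  (HaltsAt a b x (S k) <->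
   ~ ondiag d k (jj (dL1 d) (dU1 d) (fst x) k) (jj (dL2 d) (dU2 d) (snd x) k) /\
   forall i, (i < k)%nat -> ondiag d i (jj (dL1 d) (dU1 d) (fst x) i) (jj (dL2 d) (dU2 d) (snd x) i)).
Proof.
  intros Hd HR. unfold HaltsAt. rewrite HR.
  rewrite (sq_errfree_iff a b d) by (auto; apply jj_bound).
  split; intros [A B]; split; auto; intros i Hi; specialize (B i Hi).
  - rewrite HR, (sq_errfree_iff a b d) in B by (auto; apply jj_bound).
    destruct (ondiag_dec d i (jj (dL1 d) (dU1 d) (fst x) i) (jj (dL2 d) (dU2 d) (snd x) i)); tauto.
  - rewrite HR, (sq_errfree_iff a b d) by (auto; apply jj_bound). tauto.
Qed.

Lemma cell_comb d k' j1' j1S : (j1S = 2 * j1' \/ j1S = S (2 * j1'))%nat -> (j1' < 2 ^ k')%nat ->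
  exists m0, (m0 < 2 ^ S k')%nat /\
    forall m j2', (m = 2 * j2' \/ m = S (2 * j2'))%nat ->
      ((ondiag d k' j1' j2' /\ ~ ondiag d (S k') j1S m) <-> m = m0).
Proof.
  intros HS Hb. unfold ondiag. destruct (danti d).
  - destruct HS as [->| ->].
    + exists (2 * (2 ^ k' - 1 - j1'))%nat. split; [simpl; lia|].
      intros m j2' Hm. simpl. split; [intros [A B]; lia| intro; lia].
    + exists (S (2 * (2 ^ k' - 1 - j1')))%nat. split; [simpl; lia|].
      intros m j2' Hm. simpl. split; [intros [A B]; lia| intro; lia].
  - destruct HS as [->| ->].
    + exists (S (2 * j1'))%nat. split; [simpl; lia|].
      intros m j2' Hm. split; [intros [A B]; lia| intro; lia].
    + exists (2 * j1')%nat. split; [simpl; lia|].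
      intros m j2' Hm. split; [intros [A B]; lia| intro; lia].
Qed.

Lemma strip_halts a b d x1 n : DRok a b d ->
  (forall x2, dL2 d < x2 < dU2 d -> RHyp a b d (x1, x2)) -> (1 <= n)%nat ->
  is_RInt (fun x2 => indic (HaltsAt a b (x1, x2) n)) (dL2 d) (dU2 d)
    (if (n =? 1)%nat then 0 else (dU2 d - dL2 d) / 2 ^ (n - 1)).
Proof.
  intros Hd HR Hn. pose proof Hd as [H1 [H2 _]].
  destruct n as [|k]; [lia|]. destruct k as [|k'].
  - simpl. apply RInt_zero_ext; [lra|]. intros x2 Hx. apply indic_false.
    rewrite (halts_diag a b d _ 0 Hd (HR x2 Hx)). intros [A _]. apply A. apply ondiag0.
  - replace (S (S k') =? 1)%nat with false by reflexivity.
    replace (S (S k') - 1)%nat with (S k') by lia.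
    set (L1 := dL1 d) in *. set (U1 := dU1 d) in *. set (L2 := dL2 d) in *. set (U2 := dU2 d) in *.
    destruct (cell_comb d k' (jj L1 U1 x1 k') (jj L1 U1 x1 (S k')) (jj_S L1 U1 x1 k') (jj_bound L1 U1 x1 k'))
      as [m0 [Hm0 Hc]].
    assert (E : U2 = L2 + INR (2 ^ S k') * hk L2 U2 (S k')).
    { rewrite INR_pow2. unfold hk. field. apply pow_nonzero; lra. }
    replace ((U2 - L2) / 2 ^ S k') with (fsum (fun m => hk L2 U2 (S k') * (if Nat.eq_dec m m0 then 1 else 0)) (2 ^ S k')).
    2:{ rewrite (fsum_ext _ (fun m => if Nat.eq_dec m m0 then hk L2 U2 (S k') else 0)).
        - rewrite fsum_one; auto.
        - intros m _. destruct (Nat.eq_dec m m0); ring. }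
    match goal with |- is_RInt ?f _ _ ?v =>
      enough (X : is_RInt f L2 (L2 + INR (2 ^ S k') * hk L2 U2 (S k')) v) by (rewrite <- E in X; exact X) end.
    apply RInt_cells; [apply hk_pos; auto|].
    intros m s Hm Hs.
    assert (Hs' : L2 < s < U2).
    { assert (Hh := hk_pos L2 U2 (S k') H2).
      assert (0 <= INR m * hk L2 U2 (S k')) by (apply Rmult_le_pos; [apply pos_INR|lra]).
      assert (INR (S m) <= 2 ^ S k') by (rewrite <- INR_pow2; apply le_INR; lia).
      assert (INR (S m) * hk L2 U2 (S k') <= 2 ^ S k' * hk L2 U2 (S k')) by (apply Rmult_le_compat_r; lra).
      rewrite E, INR_pow2. lra. }
    assert (Jm : jj L2 U2 s (S k') = m) by (apply jj_open; auto).
    destruct (jj_S L2 U2 s k') as [E2|E2]; rewrite Jm in E2;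
    (destruct (Nat.eq_dec m m0) as [e|ne];
     [apply indic_true | apply indic_false];
     rewrite (halts_diag a b d _ (S k') Hd (HR s Hs')); cbn [fst snd]; fold L1 U1 L2 U2; rewrite Jm).
    all: first [ specialize (Hc m (jj L2 U2 s k') (or_introl E2)) | specialize (Hc m (jj L2 U2 s k') (or_intror E2)) ].
    + destruct (proj2 Hc e) as [A B]. split; auto. intros i Hi.
      apply (ondiag_all d k' L1 U1 L2 U2 x1 s A). lia.
    + intros [A B]. apply ne, Hc. split; auto.
    + destruct (proj2 Hc e) as [A B]. split; auto. intros i Hi.
      apply (ondiag_all d k' L1 U1 L2 U2 x1 s A). lia.
    + intros [A B]. apply ne, Hc. split; auto.
Qed.

Definition ystar (d : DR) (x1 : R) : R :=
  if danti d then dL2 d + (1 - tau (dL1 d) (dU1 d) x1) * (dU2 d - dL2 d)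
  else dL2 d + tau (dL1 d) (dU1 d) x1 * (dU2 d - dL2 d).

Lemma Dval_zero d x1 x2 : dL2 d < dU2 d -> Dval d (x1, x2) = 0 -> x2 = ystar d x1.
Proof.
  intros H2 E. unfold Dval, ystar in *. cbn [fst snd] in E.
  assert (X : x2 = dL2 d + tau (dL2 d) (dU2 d) x2 * (dU2 d - dL2 d)) by (unfold tau; field; lra).
  destruct (danti d); rewrite X at 1; f_equal; f_equal; lra.
Qed.

Lemma strip_err_diag a b d x1 n : DRok a b d -> dL1 d <= x1 <= dU1 d ->
  (forall x2, dL2 d < x2 < dU2 d -> RHyp a b d (x1, x2)) ->
  is_RInt (fun x2 => indic (HaltsAt a b (x1, x2) n /\ ~ CorrectAt a b (x1, x2) n)) (dL2 d) (dU2 d) 0.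
Proof.
  intros Hd Hx1 HR. pose proof Hd as [H1 [H2 _]].
  apply (RInt_zero_pt _ _ _ (ystar d x1)); [lra|]. intros x2 Hx2 Hy.
  apply indic_false. intros [Hh Hc]. apply Hc.
  destruct n as [|k]; [destruct Hh|].
  rewrite (halts_diag a b d _ k Hd (HR x2 Hx2)) in Hh. destruct Hh as [Hoff _].
  cbn [fst snd] in Hoff.
  assert (Hcl : InClosed (sq d k (jj (dL1 d) (dU1 d) x1 k) (jj (dL2 d) (dU2 d) x2 k)) (x1, x2)).
  { unfold InClosed, sq; cbn [fst snd r_l1 r_u1 r_l2 r_u2].
    pose proof (jj_closed _ _ x1 k H1 Hx1) as C1. pose proof (jj_closed _ _ x2 k H2 ltac:(lra)) as C2.
    unfold lo, hi in *. auto. }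
  destruct (sq_correct a b d k _ _ (x1, x2) Hd (jj_bound _ _ _ _) (jj_bound _ _ _ _) Hoff Hcl)
    as [u1 [u2 [A B]]]; [cbn; lra| |].
  - intro E. apply Hy. apply Dval_zero; auto.
  - exists u1, u2. split; auto. replace (S k - 1)%nat with k by lia.
    rewrite (HR x2 Hx2). auto.
Qed.


Lemma W2_top a b x2 : 0 < tau1 a b -> tau1 a b < x2 -> W2 a b x2 = 1%Z.
Proof. intros. unfold W2. destruct (Rle_dec _ _); [lra|]. destruct (Rle_dec _ _); [lra|]. auto. Qed.
Lemma W2_mid a b x2 : - tau1 a b < x2 <= tau1 a b -> W2 a b x2 = 0%Z.
Proof. intros. unfold W2. destruct (Rle_dec _ _); [lra|]. destruct (Rle_dec _ _); [auto|lra]. Qed.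
Lemma W2_bot a b x2 : x2 <= - tau1 a b -> W2 a b x2 = (-1)%Z.
Proof. intros. unfold W2. destruct (Rle_dec _ _); [auto|lra]. Qed.

Lemma Iidx_m1 a s : s <= (a-1)/2 -> Iidx a s = (-1)%Z.
Proof. intros. unfold Iidx. destruct (Rle_dec _ _); [auto|lra]. Qed.
Lemma Iidx_0 a s : (a-1)/2 < s <= a/2 -> Iidx a s = 0%Z.
Proof. intros. unfold Iidx. destruct (Rle_dec _ _); [lra|]. destruct (Rle_dec _ _); [auto|lra]. Qed.
Lemma Iidx_1 a s : 0 < a -> a/2 < s -> Iidx a s = 1%Z.
Proof. intros. unfold Iidx. destruct (Rle_dec _ _); [lra|]. destruct (Rle_dec _ _); [lra|auto]. Qed.

Lemma Iidx_cases a s : 0 < a ->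
  (Iidx a s = (-1)%Z /\ s <= (a-1)/2) \/ (Iidx a s = 0%Z /\ (a-1)/2 < s <= a/2) \/
  (Iidx a s = 1%Z /\ a/2 < s).
Proof.
  intros. destruct (Rle_dec s ((a-1)/2)); [left; split; auto; apply Iidx_m1; auto|].
  destruct (Rle_dec s (a/2)); [right; left; split; [apply Iidx_0|]; lra|].
  right; right; split; [apply Iidx_1|]; lra.
Qed.

Lemma RHyp_of a b d x1 x2 :
  rect1 a b (x1, x2) = mkRect (dL1 d) (dU1 d) (dL2 d) (dU2 d) -> RHyp a b d (x1, x2).
Proof.
  intros E k. rewrite rectn_eq. cbn zeta. rewrite E. reflexivity.
Qed.

Lemma rect1_A a b x1 x2 : 0 < a -> 0 < tau1 a b -> tau1 a b < x2 -> a/2 < x1 ->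
  rect1 a b (x1, x2) = mkRect (dL1 (dA a b)) (dU1 (dA a b)) (dL2 (dA a b)) (dU2 (dA a b)).
Proof. intros. unfold rect1, W1. cbn [fst snd]. rewrite W2_top by auto. rewrite Iidx_1 by auto. reflexivity. Qed.
Lemma rect1_B a b x1 x2 : 0 < tau1 a b -> tau1 a b < x2 -> x1 <= (a-1)/2 ->
  rect1 a b (x1, x2) = mkRect (dL1 (dB a b)) (dU1 (dB a b)) (dL2 (dB a b)) (dU2 (dB a b)).
Proof. intros. unfold rect1, W1. cbn [fst snd]. rewrite W2_top by auto. rewrite Iidx_m1 by auto. reflexivity. Qed.
Lemma rect1_C a b x1 x2 : 0 < a -> x2 <= - tau1 a b -> a/2 < - x1 ->
  rect1 a b (x1, x2) = mkRect (dL1 (dC a b)) (dU1 (dC a b)) (dL2 (dC a b)) (dU2 (dC a b)).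
Proof. intros. unfold rect1, W1. cbn [fst snd]. rewrite W2_bot by auto. rewrite (Iidx_1 a (-x1)) by auto. reflexivity. Qed.
Lemma rect1_D a b x1 x2 : x2 <= - tau1 a b -> - x1 <= (a-1)/2 ->
  rect1 a b (x1, x2) = mkRect (dL1 (dD a b)) (dU1 (dD a b)) (dL2 (dD a b)) (dU2 (dD a b)).
Proof. intros. unfold rect1, W1. cbn [fst snd]. rewrite W2_bot, (Iidx_m1 a (-x1)) by auto. reflexivity. Qed.
Lemma rect1_M a b x1 x2 : - tau1 a b < x2 <= tau1 a b ->
  rect1 a b (x1, x2) = mkRect (- / 2) (/ 2) (- tau1 a b) (tau1 a b).
Proof. intros. unfold rect1, W1. cbn [fst snd]. rewrite W2_mid by auto. reflexivity. Qed.
Lemma rect1_T0 a b x1 x2 : 0 < tau1 a b -> tau1 a b < x2 -> (a-1)/2 < x1 <= a/2 ->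
  rect1 a b (x1, x2) = mkRect ((a-1)/2) (a/2) (tau1 a b) (b/2).
Proof. intros. unfold rect1, W1. cbn [fst snd]. rewrite W2_top by auto. rewrite Iidx_0 by auto. reflexivity. Qed.
Lemma rect1_B0 a b x1 x2 : x2 <= - tau1 a b -> (a-1)/2 < - x1 <= a/2 ->
  rect1 a b (x1, x2) = mkRect (- (a/2)) (- ((a-1)/2)) (- b / 2) (- tau1 a b).
Proof. intros. unfold rect1, W1. cbn [fst snd]. rewrite W2_bot, (Iidx_0 a (-x1)) by auto. reflexivity. Qed.

Lemma uniq_M a b p : Par a b -> - / 2 < fst p < / 2 -> - tau1 a b < snd p < tau1 a b ->
  UniqueNearest a b p 0 0.
Proof.
  intros H H1 H2. dr_prep H a b. apply unique_of; auto.
  assert (Y1 : b * snd p < (b*b - a*(1-a))/2) by (rewrite <- HB; apply Rmult_lt_compat_l; lra).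
  assert (Y2 : -((b*b - a*(1-a))/2) < b * snd p) by (rewrite <- HB; nra).
  unfold HexY. repeat split; nra.
Qed.

Lemma uniq_T0 a b p : Par a b -> (a-1)/2 <= fst p <= a/2 -> tau1 a b < snd p < b/2 ->
  UniqueNearest a b p 0 0.
Proof.
  intros H H1 H2. dr_prep H a b. apply unique_of; auto.
  assert (Y1 : (b*b - a*(1-a))/2 < b * snd p) by (rewrite <- HB; apply Rmult_lt_compat_l; lra).
  assert (Y2 : b * snd p < b * b / 2) by nra.
  unfold HexY. repeat split; nra.
Qed.

Lemma uniq_B0 a b p : Par a b -> - (a/2) <= fst p <= - ((a-1)/2) -> - b / 2 < snd p < - tau1 a b ->
  UniqueNearest a b p 0 0.
Proof.
  intros H H1 H2. dr_prep H a b. apply unique_of; auto.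
  assert (Y1 : b * snd p < -((b*b - a*(1-a))/2)) by (rewrite <- HB; nra).
  assert (Y2 : -(b * b / 2) < b * snd p) by nra.
  unfold HexY. repeat split; nra.
Qed.

Definition SV (a b : R) (n : nat) (w : Z) : R :=
  if (w =? 0)%Z then (if (n =? 1)%nat then b/2 - tau1 a b else 0)
  else (if (n =? 1)%nat then 0 else (b/2 - tau1 a b) / 2 ^ (n - 1)).
Definition MV (a b : R) (n : nat) : R := if (n =? 1)%nat then 2 * tau1 a b else 0.

Lemma halts_nd a b x R0 n : rect1 a b x = R0 -> ErrFree a b R0 -> (HaltsAt a b x n <-> n = 1%nat).
Proof.
  intros E F. destruct n as [|[|k]]; simpl.
  - split; [tauto| lia].
  - rewrite E. split; auto. intros _. split; auto. intros; lia.
  - split; [|lia]. intros [_ B]. exfalso. apply (B 0%nat); [lia|]. simpl. rewrite E. auto.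
Qed.

Lemma strip_nd_halts a b x1 L2 U2 R0 n : L2 <= U2 -> ErrFree a b R0 ->
  (forall x2, L2 < x2 < U2 -> rect1 a b (x1, x2) = R0) ->
  is_RInt (fun x2 => indic (HaltsAt a b (x1, x2) n)) L2 U2 ((U2 - L2) * (if (n =? 1)%nat then 1 else 0)).
Proof.
  intros HLU F E. apply RInt_const_ext; auto. intros x2 Hx.
  destruct (Nat.eqb_spec n 1).
  - apply indic_true. apply (halts_nd a b _ R0); auto.
  - apply indic_false. rewrite (halts_nd a b _ R0); auto.
Qed.

Lemma strip_nd_err a b x1 L2 U2 R0 n : L2 <= U2 -> ErrFree a b R0 ->
  (forall x2, L2 < x2 < U2 -> rect1 a b (x1, x2) = R0) ->
  (forall x2, L2 < x2 < U2 -> UniqueNearest a b (x1, x2) 0 0) ->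
  (forall p, InInterior R0 p -> UniqueNearest a b p 0 0) ->
  is_RInt (fun x2 => indic (HaltsAt a b (x1, x2) n /\ ~ CorrectAt a b (x1, x2) n)) L2 U2 0.
Proof.
  intros HLU F E U I. apply RInt_zero_ext; auto. intros x2 Hx. apply indic_false. intros [Hh Hc].
  rewrite (halts_nd a b _ R0) in Hh by auto. subst n. apply Hc. exists 0%Z, 0%Z. split; auto.
  simpl. rewrite E by auto. auto.
Qed.

Lemma errfree_M a b : Par a b -> ErrFree a b (mkRect (- / 2) (/ 2) (- tau1 a b) (tau1 a b)).
Proof.
  intro H. apply (good_errfree a b _ 0 0). intros p [[A1 A2] [A3 A4]]. apply uniq_M; auto.
Qed.
Lemma errfree_T0 a b : Par a b -> ErrFree a b (mkRect ((a-1)/2) (a/2) (tau1 a b) (b/2)).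
Proof.
  intro H. apply (good_errfree a b _ 0 0). intros p [[A1 A2] [A3 A4]]. apply uniq_T0; auto; cbn in *; lra.
Qed.
Lemma errfree_B0 a b : Par a b -> ErrFree a b (mkRect (- (a/2)) (- ((a-1)/2)) (- b / 2) (- tau1 a b)).
Proof.
  intro H. apply (good_errfree a b _ 0 0). intros p [[A1 A2] [A3 A4]]. apply uniq_B0; auto; cbn in *; lra.
Qed.

Lemma SV_diag a b n w : (w <> 0)%Z -> (1 <= n)%nat ->
  SV a b n w = if (n =? 1)%nat then 0 else (b/2 - tau1 a b) / 2 ^ (n - 1).
Proof. intros. unfold SV. destruct (w =? 0)%Z eqn:E; auto. apply Z.eqb_eq in E. lia. Qed.

Lemma SV_0 a b n : SV a b n 0 = (b/2 - tau1 a b) * (if (n =? 1)%nat then 1 else 0).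
Proof. unfold SV. simpl. destruct (n =? 1)%nat; ring. Qed.

Lemma top_halts a b x1 n : Par a b -> - / 2 <= x1 <= / 2 -> (1 <= n)%nat ->
  is_RInt (fun x2 => indic (HaltsAt a b (x1, x2) n)) (tau1 a b) (b/2) (SV a b n (Iidx a x1)).
Proof.
  intros H Hx Hn. pose proof H as [[Ha1 Ha2] [Hb Hab]]. destruct (tau1_lt a b H) as [Ht1 Ht2].
  destruct (Iidx_cases a x1 Ha1) as [[E C]|[[E C]|[E C]]]; rewrite E.
  - rewrite SV_diag by (auto; lia).
    apply (strip_halts a b (dB a b) x1 n (dB_ok a b H)); auto.
    intros x2 Hx2. apply RHyp_of, rect1_B; unfold dA, dB, dC, dD in Hx2; cbn [dL2 dU2] in Hx2; auto; lra.
  - rewrite SV_0. apply (strip_nd_halts a b x1 (tau1 a b) (b/2) _ n ltac:(lra) (errfree_T0 a b H)).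
    intros x2 Hx2. apply rect1_T0; auto; lra.
  - rewrite SV_diag by (auto; lia).
    apply (strip_halts a b (dA a b) x1 n (dA_ok a b H)); auto.
    intros x2 Hx2. apply RHyp_of, rect1_A; unfold dA, dB, dC, dD in Hx2; cbn [dL2 dU2] in Hx2; auto; lra.
Qed.

Lemma bot_halts a b x1 n : Par a b -> - / 2 <= x1 <= / 2 -> (1 <= n)%nat ->
  is_RInt (fun x2 => indic (HaltsAt a b (x1, x2) n)) (- b / 2) (- tau1 a b) (SV a b n (Iidx a (- x1))).
Proof.
  intros H Hx Hn. pose proof H as [[Ha1 Ha2] [Hb Hab]]. destruct (tau1_lt a b H) as [Ht1 Ht2].
  destruct (Iidx_cases a (- x1) Ha1) as [[E C]|[[E C]|[E C]]]; rewrite E.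
  - rewrite SV_diag by (auto; lia).
    replace (b / 2 - tau1 a b) with (dU2 (dD a b) - dL2 (dD a b)) by (cbn; field).
    apply (strip_halts a b (dD a b) x1 n (dD_ok a b H)); auto.
    intros x2 Hx2. apply RHyp_of, rect1_D; unfold dA, dB, dC, dD in Hx2; cbn [dL2 dU2] in Hx2; auto; lra.
  - rewrite SV_0. replace (b / 2 - tau1 a b) with (- tau1 a b - - b / 2) by field.
    apply (strip_nd_halts a b x1 (- b / 2) (- tau1 a b) _ n ltac:(lra) (errfree_B0 a b H)).
    intros x2 Hx2. apply rect1_B0; auto; lra.
  - rewrite SV_diag by (auto; lia).
    replace (b / 2 - tau1 a b) with (dU2 (dC a b) - dL2 (dC a b)) by (cbn; field).
    apply (strip_halts a b (dC a b) x1 n (dC_ok a b H)); auto.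
    intros x2 Hx2. apply RHyp_of, rect1_C; unfold dA, dB, dC, dD in Hx2; cbn [dL2 dU2] in Hx2; auto; lra.
Qed.

Lemma mid_halts a b x1 n : Par a b ->
  is_RInt (fun x2 => indic (HaltsAt a b (x1, x2) n)) (- tau1 a b) (tau1 a b) (MV a b n).
Proof.
  intros H. destruct (tau1_lt a b H) as [Ht1 Ht2].
  replace (MV a b n) with ((tau1 a b - - tau1 a b) * (if (n =? 1)%nat then 1 else 0))
    by (unfold MV; destruct (n =? 1)%nat; ring).
  apply (strip_nd_halts a b x1 (- tau1 a b) (tau1 a b) _ n ltac:(lra) (errfree_M a b H)).
  intros x2 Hx2. apply rect1_M; lra.
Qed.

Lemma top_err a b x1 n : Par a b -> - / 2 <= x1 <= / 2 ->
  is_RInt (fun x2 => indic (HaltsAt a b (x1, x2) n /\ ~ CorrectAt a b (x1, x2) n)) (tau1 a b) (b/2) 0.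
Proof.
  intros H Hx. pose proof H as [[Ha1 Ha2] [Hb Hab]]. destruct (tau1_lt a b H) as [Ht1 Ht2].
  destruct (Iidx_cases a x1 Ha1) as [[E C]|[[E C]|[E C]]].
  - apply (strip_err_diag a b (dB a b) x1 n (dB_ok a b H)); [cbn; lra|].
    intros x2 Hx2. apply RHyp_of, rect1_B; unfold dA, dB, dC, dD in Hx2; cbn [dL2 dU2] in Hx2; auto; lra.
  - apply (strip_nd_err a b x1 (tau1 a b) (b/2) _ n ltac:(lra) (errfree_T0 a b H)).
    + intros x2 Hx2. apply rect1_T0; auto; lra.
    + intros x2 Hx2. apply uniq_T0; cbn; auto; lra.
    + intros p [[A1 A2] [A3 A4]]. apply uniq_T0; auto; cbn in *; lra.
  - apply (strip_err_diag a b (dA a b) x1 n (dA_ok a b H)); [cbn; lra|].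
    intros x2 Hx2. apply RHyp_of, rect1_A; unfold dA, dB, dC, dD in Hx2; cbn [dL2 dU2] in Hx2; auto; lra.
Qed.

Lemma bot_err a b x1 n : Par a b -> - / 2 <= x1 <= / 2 ->
  is_RInt (fun x2 => indic (HaltsAt a b (x1, x2) n /\ ~ CorrectAt a b (x1, x2) n)) (- b / 2) (- tau1 a b) 0.
Proof.
  intros H Hx. pose proof H as [[Ha1 Ha2] [Hb Hab]]. destruct (tau1_lt a b H) as [Ht1 Ht2].
  destruct (Iidx_cases a (- x1) Ha1) as [[E C]|[[E C]|[E C]]].
  - apply (strip_err_diag a b (dD a b) x1 n (dD_ok a b H)); [cbn; lra|].
    intros x2 Hx2. apply RHyp_of, rect1_D; unfold dA, dB, dC, dD in Hx2; cbn [dL2 dU2] in Hx2; auto; lra.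
  - apply (strip_nd_err a b x1 (- b / 2) (- tau1 a b) _ n ltac:(lra) (errfree_B0 a b H)).
    + intros x2 Hx2. apply rect1_B0; auto; lra.
    + intros x2 Hx2. apply uniq_B0; cbn; auto; lra.
    + intros p [[A1 A2] [A3 A4]]. apply uniq_B0; auto; cbn in *; lra.
  - apply (strip_err_diag a b (dC a b) x1 n (dC_ok a b H)); [cbn; lra|].
    intros x2 Hx2. apply RHyp_of, rect1_C; unfold dA, dB, dC, dD in Hx2; cbn [dL2 dU2] in Hx2; auto; lra.
Qed.

Lemma mid_err_in a b x1 n : Par a b -> - / 2 < x1 < / 2 ->
  is_RInt (fun x2 => indic (HaltsAt a b (x1, x2) n /\ ~ CorrectAt a b (x1, x2) n)) (- tau1 a b) (tau1 a b) 0.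
Proof.
  intros H Hx. destruct (tau1_lt a b H) as [Ht1 Ht2].
  apply (strip_nd_err a b x1 (- tau1 a b) (tau1 a b) _ n ltac:(lra) (errfree_M a b H)).
  - intros x2 Hx2. apply rect1_M; lra.
  - intros x2 Hx2. apply uniq_M; cbn; auto; lra.
  - intros p [[A1 A2] [A3 A4]]. apply uniq_M; auto.
Qed.

Lemma not_correct_edge a b x1 x2 : Par a b -> (x1 = / 2 \/ x1 = - / 2) ->
  - tau1 a b < x2 < tau1 a b -> ~ CorrectAt a b (x1, x2) 1.
Proof.
  intros H Hx Hx2 [u1 [u2 [U I]]]. destruct (tau1_lt a b H) as [Ht1 Ht2].
  simpl in I. rewrite rect1_M in I by lra.
  assert (I0 := I (0, 0) ltac:(unfold InInterior; cbn; lra)).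
  assert (M0 := uniq_M a b (0,0) H ltac:(cbn; lra) ltac:(cbn; lra)).
  assert (Eu : (u1, u2) = (0%Z, 0%Z)).
  { destruct (Z.eq_dec u1 0) as [->|n1]; [destruct (Z.eq_dec u2 0) as [->|n2]|]; auto.
    - specialize (I0 0%Z 0%Z ltac:(congruence)). specialize (M0 0%Z u2 ltac:(congruence)). lra.
    - specialize (I0 0%Z 0%Z ltac:(congruence)). specialize (M0 u1 u2 ltac:(congruence)). lra. }
  injection Eu as -> ->.
  destruct Hx as [-> | ->].
  - specialize (U 1%Z 0%Z ltac:(congruence)). unfold dist2, lat in U; cbn in U. nra.
  - specialize (U (-1)%Z 0%Z ltac:(congruence)). unfold dist2, lat in U; cbn in U. nra.
Qed.

Lemma mid_err_edge a b x1 n : Par a b -> (x1 = / 2 \/ x1 = - / 2) ->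
  is_RInt (fun x2 => indic (HaltsAt a b (x1, x2) n /\ ~ CorrectAt a b (x1, x2) n)) (- tau1 a b) (tau1 a b) (MV a b n).
Proof.
  intros H Hx. destruct (tau1_lt a b H) as [Ht1 Ht2].
  replace (MV a b n) with ((tau1 a b - - tau1 a b) * (if (n =? 1)%nat then 1 else 0))
    by (unfold MV; destruct (n =? 1)%nat; ring).
  apply RInt_const_ext; [lra|]. intros x2 Hx2.
  assert (Hh : HaltsAt a b (x1, x2) n <-> n = 1%nat)
    by (apply (halts_nd a b _ _ n (rect1_M a b x1 x2 ltac:(lra)) (errfree_M a b H))).
  destruct (Nat.eqb_spec n 1).
  - subst. apply indic_true. split; [apply Hh; auto|]. apply not_correct_edge; auto.
  - apply indic_false. intros [A _]. apply Hh in A. auto.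
Qed.

Definition CT (a b : R) (n : nat) (w : Z) : R := log2 (/ Qd a b 1) + log2 (/ Pd a w) + 2 * INR (n - 1).
Definition CB (a b : R) (n : nat) (w : Z) : R := log2 (/ Qd a b (-1)) + log2 (/ Pd a w) + 2 * INR (n - 1).
Definition CM (a b : R) (n : nat) : R := log2 (/ Qd a b 0) + 0 + 2 * INR (n - 1).

Lemma rcost_top a b x1 x2 n : 0 < tau1 a b -> tau1 a b < x2 ->
  RcostAt a b (x1, x2) n = CT a b n (Iidx a x1).
Proof. intros. unfold RcostAt, cost1, W1. cbn [fst snd]. rewrite W2_top by auto. reflexivity. Qed.
Lemma rcost_bot a b x1 x2 n : x2 <= - tau1 a b ->
  RcostAt a b (x1, x2) n = CB a b n (Iidx a (- x1)).
Proof. intros. unfold RcostAt, cost1, W1. cbn [fst snd]. rewrite W2_bot by auto. reflexivity. Qed.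
Lemma rcost_mid a b x1 x2 n : - tau1 a b < x2 <= tau1 a b ->
  RcostAt a b (x1, x2) n = CM a b n.
Proof. intros. unfold RcostAt, cost1, W1. cbn [fst snd]. rewrite W2_mid by auto. reflexivity. Qed.

Lemma RInt_scale (f g : R -> R) L U v c : L <= U -> is_RInt f L U v ->
  (forall x, L < x < U -> g x = c * f x) -> is_RInt g L U (c * v).
Proof.
  intros HLU Hf E. rewrite <- scalR. apply (ext_open (fun y => scal c (f y))); auto.
  - intros. rewrite E by auto. reflexivity.
  - exact (@is_RInt_scal R_NormedModule f L U c v Hf).
Qed.

Lemma slice_halts a b x1 n : Par a b -> - / 2 <= x1 <= / 2 -> (1 <= n)%nat ->
  is_RInt (fun x2 => indic (HaltsAt a b (x1, x2) n)) (- b / 2) (b / 2)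
    (SV a b n (Iidx a (- x1)) + MV a b n + SV a b n (Iidx a x1)).
Proof.
  intros H Hx Hn.
  apply (chasles _ _ (tau1 a b)); [apply (chasles _ _ (- tau1 a b))|].
  - apply bot_halts; auto.
  - apply mid_halts; auto.
  - apply top_halts; auto.
Qed.

Lemma slice_cost a b x1 n : Par a b -> - / 2 <= x1 <= / 2 -> (1 <= n)%nat ->
  is_RInt (fun x2 => RcostAt a b (x1, x2) n * indic (HaltsAt a b (x1, x2) n)) (- b / 2) (b / 2)
    (CB a b n (Iidx a (- x1)) * SV a b n (Iidx a (- x1)) + CM a b n * MV a b n
     + CT a b n (Iidx a x1) * SV a b n (Iidx a x1)).
Proof.
  intros H Hx Hn. destruct (tau1_lt a b H) as [Ht1 Ht2].
  apply (chasles _ _ (tau1 a b)); [apply (chasles _ _ (- tau1 a b))|].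
  - eapply RInt_scale; [lra| apply bot_halts; auto|]. intros x2 Hx2. rewrite rcost_bot by lra. reflexivity.
  - eapply RInt_scale; [lra| apply mid_halts; auto|]. intros x2 Hx2. rewrite rcost_mid by lra. reflexivity.
  - eapply RInt_scale; [lra| apply top_halts; auto|]. intros x2 Hx2. rewrite rcost_top by lra. reflexivity.
Qed.

Lemma slice_err_in a b x1 n : Par a b -> - / 2 < x1 < / 2 ->
  is_RInt (fun x2 => indic (HaltsAt a b (x1, x2) n /\ ~ CorrectAt a b (x1, x2) n)) (- b / 2) (b / 2) 0.
Proof.
  intros H Hx. replace 0 with (0 + 0 + 0) by ring.
  apply (chasles _ _ (tau1 a b)); [apply (chasles _ _ (- tau1 a b))|].
  - apply bot_err; auto; lra.
  - apply mid_err_in; auto.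
  - apply top_err; auto; lra.
Qed.

Lemma slice_err_ex a b x1 n : Par a b -> - / 2 <= x1 <= / 2 ->
  exists v, is_RInt (fun x2 => indic (HaltsAt a b (x1, x2) n /\ ~ CorrectAt a b (x1, x2) n)) (- b / 2) (b / 2) v.
Proof.
  intros H Hx. destruct (Req_dec x1 (/2)) as [E|E]; [|destruct (Req_dec x1 (-/2)) as [E'|E']].
  - exists (0 + MV a b n + 0).
    apply (chasles _ _ (tau1 a b)); [apply (chasles _ _ (- tau1 a b))|].
    + apply bot_err; auto.
    + apply mid_err_edge; auto.
    + apply top_err; auto.
  - exists (0 + MV a b n + 0).
    apply (chasles _ _ (tau1 a b)); [apply (chasles _ _ (- tau1 a b))|].
    + apply bot_err; auto.
    + apply mid_err_edge; auto.
    + apply top_err; auto.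
  - exists 0. apply slice_err_in; auto. lra.
Qed.

Lemma Int2_of b (F : R -> R -> R) (h : R -> R) V :
  (forall x1, - / 2 <= x1 <= / 2 -> exists v, is_RInt (F x1) (- b / 2) (b / 2) v) ->
  (forall x1, - / 2 < x1 < / 2 -> is_RInt (F x1) (- b / 2) (b / 2) (h x1)) ->
  is_RInt h (- / 2) (/ 2) V -> Int2_is b F V.
Proof.
  intros Ex Ho Hh. exists (fun x1 => RInt (F x1) (- b / 2) (b / 2)). split.
  - intros x1 Hx. destruct (Ex x1 Hx) as [v Hv]. rewrite (is_RInt_unique _ _ _ _ Hv).
    apply to_RInt_is; auto.
  - apply to_RInt_is. apply (ext_open h); [lra| |auto].
    intros x1 Hx. symmetry. apply is_RInt_unique. auto.
Qed.

Lemma RInt_plus3 (f g h : R -> R) L U u v w : is_RInt f L U u -> is_RInt g L U v -> is_RInt h L U w ->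
  is_RInt (fun x => f x + g x + h x) L U (u + v + w).
Proof.
  intros A B C. rewrite <- !plusR.
  apply (@is_RInt_plus R_NormedModule); [apply (@is_RInt_plus R_NormedModule)|]; auto.
Qed.

Definition Sw (a : R) (phi : Z -> R) : R := Pd a (-1) * phi (-1)%Z + Pd a 0 * phi 0%Z + Pd a 1 * phi 1%Z.

Lemma Pd_vals a : Pd a (-1) = a / 2 /\ Pd a 0 = / 2 /\ Pd a 1 = (1 - a) / 2.
Proof. unfold Pd, Ihi, Ilo. simpl. repeat split; field. Qed.

Lemma outer_Iidx a (phi : Z -> R) : 0 < a < / 2 ->
  is_RInt (fun x1 => phi (Iidx a x1)) (- / 2) (/ 2) (Sw a phi).
Proof.
  intros [Ha1 Ha2]. destruct (Pd_vals a) as (P1 & P2 & P3). unfold Sw. rewrite P1, P2, P3.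
  apply (chasles _ _ (a/2)); [apply (chasles _ _ ((a-1)/2))|].
  - replace (a / 2 * phi (-1)%Z) with (((a-1)/2 - - / 2) * phi (-1)%Z) by field.
    apply RInt_const_ext; [lra|]. intros; rewrite Iidx_m1 by lra; auto.
  - replace (/ 2 * phi 0%Z) with ((a/2 - (a-1)/2) * phi 0%Z) by field.
    apply RInt_const_ext; [lra|]. intros; rewrite Iidx_0 by lra; auto.
  - replace ((1 - a) / 2 * phi 1%Z) with ((/2 - a/2) * phi 1%Z) by field.
    apply RInt_const_ext; [lra|]. intros; rewrite Iidx_1 by lra; auto.
Qed.

Lemma outer_Iidx_neg a (phi : Z -> R) : 0 < a < / 2 ->
  is_RInt (fun x1 => phi (Iidx a (- x1))) (- / 2) (/ 2) (Sw a phi).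
Proof.
  intros [Ha1 Ha2]. destruct (Pd_vals a) as (P1 & P2 & P3). unfold Sw. rewrite P1, P2, P3.
  replace (a / 2 * phi (-1)%Z + / 2 * phi 0%Z + (1 - a) / 2 * phi 1%Z) with
    ((1 - a) / 2 * phi 1%Z + / 2 * phi 0%Z + a / 2 * phi (-1)%Z) by ring.
  apply (chasles _ _ ((1-a)/2)); [apply (chasles _ _ (-(a/2)))|].
  - replace ((1 - a) / 2 * phi 1%Z) with ((-(a/2) - - / 2) * phi 1%Z) by field.
    apply RInt_const_ext; [lra|]. intros; rewrite Iidx_1 by lra; auto.
  - replace (/ 2 * phi 0%Z) with (((1-a)/2 - -(a/2)) * phi 0%Z) by field.
    apply RInt_const_ext; [lra|]. intros; rewrite Iidx_0 by lra; auto.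
  - replace (a / 2 * phi (-1)%Z) with ((/2 - (1-a)/2) * phi (-1)%Z) by field.
    apply RInt_const_ext; [lra|]. intros; rewrite Iidx_m1 by lra; auto.
Qed.

Lemma outer_const (c : R) : is_RInt (fun _ => c) (- / 2) (/ 2) c.
Proof.
  assert (X : is_RInt (fun _ : R => c) (-/2) (/2) ((/2 - - /2) * c)) by (apply RInt_const_ext; [lra|auto]).
  replace ((/2 - - /2) * c) with c in X by field. exact X.
Qed.

Definition bp (a b : R) (n : nat) : R := Sw a (SV a b n) + MV a b n + Sw a (SV a b n).
Definition br (a b : R) (n : nat) : R :=
  Sw a (fun w => CB a b n w * SV a b n w) + CM a b n * MV a b n + Sw a (fun w => CT a b n w * SV a b n w).

Lemma int_halts a b n : Par a b -> (1 <= n)%nat ->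
  Int2_is b (fun x1 x2 => indic (HaltsAt a b (x1, x2) n)) (bp a b n).
Proof.
  intros H Hn. pose proof H as [Ha [Hb Hab]].
  apply (Int2_of b _ (fun x1 => SV a b n (Iidx a (- x1)) + MV a b n + SV a b n (Iidx a x1))).
  - intros x1 Hx. eexists. apply slice_halts; auto.
  - intros x1 Hx. apply slice_halts; auto; lra.
  - apply RInt_plus3; [apply outer_Iidx_neg| apply outer_const| apply outer_Iidx]; auto.
Qed.

Lemma int_cost a b n : Par a b -> (1 <= n)%nat ->
  Int2_is b (fun x1 x2 => RcostAt a b (x1, x2) n * indic (HaltsAt a b (x1, x2) n)) (br a b n).
Proof.
  intros H Hn. pose proof H as [Ha [Hb Hab]].
  apply (Int2_of b _ (fun x1 => CB a b n (Iidx a (- x1)) * SV a b n (Iidx a (- x1)) + CM a b n * MV a b n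
     + CT a b n (Iidx a x1) * SV a b n (Iidx a x1))).
  - intros x1 Hx. eexists. apply slice_cost; auto.
  - intros x1 Hx. apply slice_cost; auto; lra.
  - apply RInt_plus3; [apply (outer_Iidx_neg a (fun w => CB a b n w * SV a b n w))| apply outer_const|
      apply (outer_Iidx a (fun w => CT a b n w * SV a b n w))]; auto.
Qed.

Lemma int_err a b n : Par a b ->
  Int2_is b (fun x1 x2 => indic (HaltsAt a b (x1, x2) n /\ ~ CorrectAt a b (x1, x2) n)) 0.
Proof.
  intros H.
  apply (Int2_of b _ (fun _ => 0)).
  - intros x1 Hx. apply slice_err_ex; auto.
  - intros x1 Hx. apply slice_err_in; auto.
  - apply outer_const.
Qed.

Lemma pow23 N : (INR N + 2) * (2/3) ^ N <= 2.
Proof.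
  induction N as [|N IH].
  - simpl. lra.
  - rewrite S_INR. simpl pow.
    assert (0 < (2/3)^N) by (apply pow_lt; lra).
    assert (0 <= INR N) by apply pos_INR.
    nra.
Qed.

Lemma pow_bound N : (INR N + 2) * (/2) ^ N <= 2 * (3/4) ^ N.
Proof.
  replace ((/2)^N) with ((2/3)^N * (3/4)^N) by (rewrite <- Rpow_mult_distr; f_equal; field).
  assert (0 < (3/4)^N) by (apply pow_lt; lra).
  pose proof (pow23 N). nra.
Qed.

Definition ser (A C D : R) (k : nat) : R :=
  if (k =? 0)%nat then A else (/2) ^ k * (C + D * INR k).

Lemma ser_partial A C D N :
  sum_f_R0 (ser A C D) N = A + C * (1 - (/2)^N) + D * (2 - (INR N + 2) * (/2)^N).
Proof.
  induction N as [|N IH].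
  - simpl. unfold ser. simpl. ring.
  - simpl sum_f_R0. rewrite IH. unfold ser. simpl (S N =? 0)%nat. rewrite S_INR. simpl pow. field.
Qed.

Lemma ser_sum A C D : infinite_sum (ser A C D) (A + C + 2 * D).
Proof.
  intros eps Heps.
  set (K := Rabs C + 2 * Rabs D + 1).
  assert (HK : 0 < K) by (unfold K; pose proof (Rabs_pos C); pose proof (Rabs_pos D); lra).
  destruct (pow_lt_1_zero (3/4) ltac:(rewrite Rabs_right; lra) (eps / K) ltac:(apply Rdiv_lt_0_compat; lra))
    as [N HN].
  exists N. intros n Hn. specialize (HN n Hn). rewrite Rabs_right in HN by (apply Rle_ge, pow_le; lra).
  unfold R_dist. rewrite ser_partial.
  replace (A + C * (1 - (/ 2) ^ n) + D * (2 - (INR n + 2) * (/ 2) ^ n) - (A + C + 2 * D))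
    with (- (C * (/2)^n + D * ((INR n + 2) * (/2)^n))) by ring.
  rewrite Rabs_Ropp.
  pose proof (pow_bound n) as PB.
  assert (P1 : 0 < (/2)^n) by (apply pow_lt; lra).
  assert (P2 : (/2)^n <= (3/4)^n) by (apply pow_incr; lra).
  assert (P3 : 0 <= (INR n + 2) * (/2)^n) by (apply Rmult_le_pos; [pose proof (pos_INR n); lra| lra]).
  eapply Rle_lt_trans; [apply Rabs_triang|]. rewrite (Rabs_mult C), (Rabs_mult D).
  rewrite (Rabs_right ((/2)^n)) by lra. rewrite (Rabs_right ((INR n + 2) * (/2)^n)) by lra.
  assert (Rabs C * (/2)^n <= Rabs C * (3/4)^n) by (apply Rmult_le_compat_l; [apply Rabs_pos|lra]).
  assert (Rabs D * ((INR n + 2) * (/2)^n) <= Rabs D * (2 * (3/4)^n)) by (apply Rmult_le_compat_l; [apply Rabs_pos|lra]).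
  assert (K * (3/4)^n < eps).
  { apply (Rmult_lt_compat_l K) in HN; auto. replace (K * (eps / K)) with eps in HN by (field; lra). lra. }
  unfold K in *. pose proof (pow_lt (3/4) n ltac:(lra)). nra.
Qed.

Lemma infinite_sum_ext (f g : nat -> R) l : (forall k, f k = g k) -> infinite_sum f l -> infinite_sum g l.
Proof.
  intros E H eps He. destruct (H eps He) as [N HN]. exists N. intros n Hn.
  rewrite <- (sum_eq f g n) by auto. auto.
Qed.

Lemma bp_val a b k : Par a b ->
  bp a b (S k) = if (k =? 0)%nat then (b/2 - tau1 a b) + 2 * tau1 a b else (b/2 - tau1 a b) * (/2)^k.
Proof.
  intro H. destruct (Pd_vals a) as (P1 & P2 & P3).
  unfold bp, Sw. rewrite !(SV_diag a b (S k) (-1)), !(SV_diag a b (S k) 1), !SV_0 by (lia || discriminate).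
  rewrite P1, P2, P3. unfold MV.
  destruct k as [|k].
  - simpl. field.
  - replace (S (S k) =? 1)%nat with false by reflexivity. simpl Nat.eqb.
    replace (S (S k) - 1)%nat with (S k) by lia. rewrite pow_inv. field. apply pow_nonzero. lra.
Qed.

Definition Cr a b := (b/2 - tau1 a b) / b *
  (Pd a (-1) * (log2 (/ Qd a b (-1)) + log2 (/ Qd a b 1) + 2 * log2 (/ Pd a (-1)))
   + Pd a 1 * (log2 (/ Qd a b (-1)) + log2 (/ Qd a b 1) + 2 * log2 (/ Pd a 1))).
Definition Dr a b := (b/2 - tau1 a b) / b * (4 * (Pd a (-1) + Pd a 1)).

Lemma br_val a b k : Par a b -> (1 <= k)%nat ->
  br a b (S k) / b = (/2)^k * (Cr a b + Dr a b * INR k).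
Proof.
  intros H Hk. pose proof H as [Ha [Hb Hab]]. destruct (Pd_vals a) as (P1 & P2 & P3).
  unfold br, Sw. rewrite !(SV_diag a b (S k) (-1)), !(SV_diag a b (S k) 1), !SV_0 by (lia || discriminate).
  unfold MV, Cr, Dr, CB, CT, CM.
  destruct k as [|k]; [lia|].
  replace (S (S k) =? 1)%nat with false by reflexivity.
  replace (S (S k) - 1)%nat with (S k) by lia. rewrite pow_inv.
  field. split; [lra| apply pow_nonzero; lra].
Qed.

Lemma log2_inv x : 0 < x -> log2 (/ x) = - log2 x.
Proof. intro. unfold log2. rewrite ln_Rinv by auto. field. pose proof ln_lt_2. lra. Qed.
Lemma log2_half : log2 (/ 2) = -1.
Proof. unfold log2. rewrite ln_Rinv by lra. field. pose proof ln_lt_2. lra. Qed.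

Lemma par_of rho theta : 1 <= rho -> 0 < rho * cos theta < / 2 -> 0 < rho * sin theta ->
  Par (rho * cos theta) (rho * sin theta).
Proof.
  intros H1 H2 H3. split; [auto|]. split; [auto|].
  pose proof (sin2_cos2 theta) as E. unfold Rsqr in E.
  replace (rho * cos theta * (rho * cos theta) + rho * sin theta * (rho * sin theta))
    with (rho * rho * (sin theta * sin theta + cos theta * cos theta)) by ring.
  rewrite E. nra.
Qed.

Lemma Qd_vals a b : 0 < b ->
  Qd a b (-1) = (b/2 - tau1 a b)/b /\ Qd a b 1 = (b/2 - tau1 a b)/b /\ Qd a b 0 = 2 * tau1 a b / b.
Proof. intros. unfold Qd, Jhi, Jlo. simpl. repeat split; field; lra. Qed.

Lemma rbar_id a b : Par a b -> br a b 1 / b + Cr a b + 2 * Dr a b = Rbar a b.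
Proof.
  intro H. pose proof H as [[Ha1 Ha2] [Hb Hab]]. destruct (tau1_lt a b H) as [Ht1 Ht2].
  destruct (Pd_vals a) as (P1 & P2 & P3). destruct (Qd_vals a b Hb) as (Q1 & Q2 & Q3).
  assert (QM : Qd a b (-1) = Qd a b 1) by (rewrite Q1, Q2; auto).
  assert (PQ1 : 0 < Qd a b 1) by (rewrite Q2; apply Rdiv_lt_0_compat; lra).
  assert (PQ0 : 0 < Qd a b 0) by (rewrite Q3; apply Rdiv_lt_0_compat; lra).
  assert (PP1 : 0 < Pd a (-1)) by (rewrite P1; lra).
  assert (PP3 : 0 < Pd a 1) by (rewrite P3; lra).
  unfold br, Sw, Cr, Dr, Rbar, Nbar, H3, CB, CT, CM, SV, MV.
  cbn [Z.eqb Nat.eqb Pos.eqb Nat.sub].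
  change (INR 0) with 0.
  rewrite !QM.
  rewrite !log2_inv by (auto; rewrite P2; lra).
  rewrite !P2, !log2_half.
  set (lq1 := log2 (Qd a b 1)). set (lq0 := log2 (Qd a b 0)).
  set (lpm := log2 (Pd a (-1))). set (lpp := log2 (Pd a 1)).
  rewrite Q2, Q3, P1, P3.
  field. lra.
Qed.

Theorem mainTheorem1 (rho theta : R) :
  1 <= rho -> 0 < rho * cos theta < / 2 -> 0 < rho * sin theta ->
  let a := rho * cos theta in
  let b := rho * sin theta in
  exists p r : nat -> R,
    (forall n : nat, (1 <= n)%nat ->
       Int2_is b (fun x1 x2 => indic (HaltsAt a b (x1, x2) n)) (b * p n)) /\
    (forall n : nat, (1 <= n)%nat ->
       Int2_is b (fun x1 x2 => RcostAt a b (x1, x2) n * indic (HaltsAt a b (x1, x2) n))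
               (b * r n)) /\
    infinite_sum (fun k => p (S k)) 1 /\
    (forall n : nat, (1 <= n)%nat ->
       Int2_is b (fun x1 x2 => indic (HaltsAt a b (x1, x2) n /\ ~ CorrectAt a b (x1, x2) n)) 0) /\
    infinite_sum (fun k => r (S k)) (Rbar a b) /\
    infinite_sum (fun k => INR (S k) * p (S k)) (Nbar a b).
Proof.
  intros H1 H2 H3 a b.
  assert (H : Par a b) by (apply par_of; auto).
  pose proof H as [[Ha1 Ha2] [Hb Hab]]. destruct (tau1_lt a b H) as [Ht1 Ht2].
  destruct (Pd_vals a) as (P1 & P2 & P3). destruct (Qd_vals a b Hb) as (Q1 & Q2 & Q3).
  set (t := tau1 a b) in *.
  exists (fun n => bp a b n / b), (fun n => br a b n / b).
  split; [|split; [|split; [|split; [|split]]]].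
  - intros n Hn. replace (b * (bp a b n / b)) with (bp a b n) by (field; lra). apply int_halts; auto.
  - intros n Hn. replace (b * (br a b n / b)) with (br a b n) by (field; lra). apply int_cost; auto.
  - apply (infinite_sum_ext (ser ((b/2 - t + 2 * t)/b) ((b/2 - t)/b) 0)).
    + intro k. unfold ser. rewrite bp_val by auto. fold t. destruct k; simpl; field; lra.
    + replace 1 with ((b/2 - t + 2 * t)/b + (b/2 - t)/b + 2 * 0) by (field; lra). apply ser_sum.
  - intros n Hn. apply int_err; auto.
  - apply (infinite_sum_ext (ser (br a b 1 / b) (Cr a b) (Dr a b))).
    + intro k. unfold ser. destruct k as [|k]; [reflexivity|].
      simpl Nat.eqb. rewrite (br_val a b (S k) H) by lia. reflexivity.
    + rewrite <- rbar_id by auto. apply ser_sum.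
  - apply (infinite_sum_ext (ser ((b/2 - t + 2 * t)/b) ((b/2 - t)/b) ((b/2 - t)/b))).
    + intro k. unfold ser. rewrite bp_val by auto. fold t. destruct k; [simpl; field; lra|].
      simpl Nat.eqb. rewrite !S_INR. field. lra.
    + replace (Nbar a b) with ((b/2 - t + 2 * t)/b + (b/2 - t)/b + 2 * ((b/2 - t)/b)).
      * apply ser_sum.
      * unfold Nbar. rewrite P2, Q3. field. lra.
Qed.
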